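(* Consider the waning-immunity model described in the context, and suppose $(\omega_n+\mu)(\mu+r)<\beta_0\omega_n+\beta_n\mu$. Then, provided $\delta\ge0$ is sufficiently small, the endemic equilibrium of the system (the unique equilibrium with $I^*\in(0,1]$) is locally asymptotically stable.
   Context: Model: Fix an integer $n\ge 1$ and parameters $\delta\ge 0$ (rate of waning immunity), $\omega\ge 0$ (vaccination rate), $r>0$ (recovery rate), $\mu>0$ (birth = death rate), coverages $p_0=0$, $p_1,\dots,p_n\in[0,1]$, and transmission rates $0\le\beta_0\le\beta_1\le\dots\le\beta_n$ with $\beta_0<\beta_n$. Write $\omega_i=p_i\omega$, $\delta_i=(1-p_i)\delta$ (so $\delta_0=\delta$). The ODE system for $(S_0,\dots,S_n,I)$ is $$S_0'=\sum_{i=1}^n\omega_iS_i-\delta S_0+rI-\beta_0IS_0-\mu S_0,$$ $$S_i'=-\omega_iS_i+\delta_{i-1}S_{i-1}-\delta_iS_i-\beta_iIS_i-\mu S_i\quad(1\le i\le n-1),$$ $$S_n'=\mu-\omega_nS_n+\delta_{n-1}S_{n-1}-\beta_nIS_n-\mu S_n,$$ $$I'=I\sum_{i=0}^n\beta_iS_i-rI-\mu I,$$ with the normalization $\sum_iS_i+I=1$. An endemic equilibrium is an equilibrium $(S_0^*,\dots,S_n^*,I^* )$ of this system satisfying the normalization with $I^*\neq0$. Stability refers to the equilibrium of the $(n+2)$-dimensional ODE system. *)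

(* Defs.v *)
From Stdlib Require Import Reals Lra Lia.
From Coquelicot Require Import Coquelicot.
Open Scope R_scope.

(* State vector x : nat -> R with x 0 .. x n = S_0 .. S_n and x (S n) = I.
   Components beyond S n are irrelevant. *)

Definition om (p : nat -> R) (omega : R) (i : nat) : R := p i * omega.
Definition de (p : nat -> R) (delta : R) (i : nat) : R := (1 - p i) * delta.

(* The vector field of the waning-immunity model (n >= 1 assumed). *)
Definition field (n : nat) (delta omega r mu : R) (p beta : nat -> R)
    (x : nat -> R) (i : nat) : R :=
  let I := x (S n) in
  if Nat.eqb i 0 then
    sum_f_R0 (fun k => om p omega (S k) * x (S k)) (n - 1)
      - delta * x 0%nat + r * I - beta 0%nat * I * x 0%nat - mu * x 0%nat
  else if Nat.ltb i n then
    - om p omega i * x i + de p delta (i - 1) * x (i - 1)%nat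
      - de p delta i * x i - beta i * I * x i - mu * x i
  else if Nat.eqb i n then
    mu - om p omega n * x n + de p delta (n - 1) * x (n - 1)%nat
      - beta n * I * x n - mu * x n
  else if Nat.eqb i (S n) then
    I * sum_f_R0 (fun k => beta k * x k) n - r * I - mu * I
  else 0.

Definition close (N : nat) (d : R) (x e : nat -> R) : Prop :=
  forall i : nat, (i <= N)%nat -> Rabs (x i - e i) < d.

Definition solution_on (F : (nat -> R) -> nat -> R) (N : nat) (T : R)
    (x : R -> nat -> R) : Prop :=
  forall t : R, 0 <= t < T -> forall i : nat, (i <= N)%nat ->
    is_derive (fun s => x s i) t (F (x t) i).

Definition is_equilibrium (F : (nat -> R) -> nat -> R) (N : nat) (e : nat -> R) : Prop :=
  forall i : nat, (i <= N)%nat -> F e i = 0.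

Definition loc_asymp_stable (F : (nat -> R) -> nat -> R) (N : nat) (e : nat -> R) : Prop :=
  (forall eps : R, 0 < eps -> exists d : R, 0 < d /\
     forall (T : R) (x : R -> nat -> R), solution_on F N T x -> close N d (x 0) e ->
       forall t : R, 0 <= t < T -> close N eps (x t) e)
  /\
  (exists d : R, 0 < d /\
     forall x : R -> nat -> R, (forall T : R, solution_on F N T x) -> close N d (x 0) e ->
       forall i : nat, (i <= N)%nat ->
         is_lim (fun t => x t i) p_infty (e i)).

Definition endemic_eq (n : nat) (delta omega r mu : R) (p beta : nat -> R)
    (e : nat -> R) : Prop :=
  is_equilibrium (field n delta omega r mu p beta) (S n) e
  /\ sum_f_R0 e n + e (S n) = 1
  /\ 0 < e (S n) <= 1.

(* Main.v *)
Require Import Defs.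
From Stdlib Require Import Reals Lra Lia Psatz Classical.
From Coquelicot Require Import Coquelicot.
Open Scope R_scope.


Lemma ball_R (x y : R) (e : posreal) : Rabs (y - x) < e -> ball x e y.
Proof. intros H. exact H. Qed.

Lemma is_derive_eq (f : R -> R) (x l1 l2 : R) : is_derive f x l1 -> l1 = l2 -> is_derive f x l2.
Proof. intros H ->; exact H. Qed.

Lemma derive_cont (g : R -> R) t l : is_derive g t l -> continuity_pt g t.
Proof.
  intros H. apply continuity_pt_filterlim. apply (ex_derive_continuous g t). exists l; exact H.
Qed.

Lemma cont_eps (g : R -> R) t : continuity_pt g t -> forall eps, 0 < eps ->
  exists eta, 0 < eta /\ forall u, Rabs (u - t) < eta -> Rabs (g u - g t) < eps.
Proof.
  intros H eps Heps. apply continuity_pt_locally with (eps := mkposreal eps Heps) in H.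
  destruct H as [eta Heta]. exists eta. split. apply cond_pos.
  intros u Hu. apply Heta. apply ball_R. exact Hu.
Qed.

Lemma mono_nonpos (g dg : R -> R) a b : a <= b ->
  (forall u, a <= u <= b -> is_derive g u (dg u)) ->
  (forall u, a <= u <= b -> dg u <= 0) -> g b <= g a.
Proof.
  intros Hab Hd Hn.
  destruct (MVT_gen g a b dg) as [c [Hc Heq]].
  - intros x Hx. rewrite Rmin_left in Hx by lra. rewrite Rmax_right in Hx by lra.
    apply Hd; lra.
  - intros x Hx. rewrite Rmin_left in Hx by lra. rewrite Rmax_right in Hx by lra.
    apply (derive_cont g x (dg x)). apply Hd; lra.
  - rewrite Rmin_left in Hc by lra. rewrite Rmax_right in Hc by lra.
    assert (dg c <= 0) by (apply Hn; lra).
    assert (dg c * (b - a) <= 0) by nra. lra.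
Qed.

Lemma barrier (g dg : R -> R) T thr :
  (forall t, 0 <= t < T -> is_derive g t (dg t)) -> g 0 < thr ->
  (forall t, 0 <= t < T -> g t < thr -> dg t <= 0) ->
  forall t, 0 <= t < T -> g t <= g 0.
Proof.
  intros Hd H0 Hn t1 Ht1.
  destruct (Rle_or_lt (g t1) (g 0)) as [Hle|Hgt]; [exact Hle|exfalso].
  set (E := fun s => 0 <= s <= t1 /\ forall u, 0 <= u <= s -> g u <= g 0).
  assert (HB : bound E). { exists t1. intros s [Hs _]. lra. }
  assert (HE : exists s, E s). { exists 0. split. lra. intros u Hu. replace u with 0 by lra. lra. }
  destruct (completeness E HB HE) as [s Hs].
  destruct Hs as [Hub Hlub].
  assert (Hs0 : 0 <= s). { apply Hub. split. lra. intros u Hu. replace u with 0 by lra. lra. }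
  assert (Hs1 : s <= t1). { apply Hlub. intros x [Hx _]. lra. }
  assert (C1 : forall u, 0 <= u < s -> g u <= g 0).
  { intros u Hu. destruct (Rle_or_lt s u) as [Hsu|Hus]; [lra|].
    assert (exists s', E s' /\ u < s').
    { apply NNPP. intros Hno. assert (s <= u). apply Hlub. intros x Hx.
      destruct (Rle_or_lt x u) as [|Hxu]; [lra|]. exfalso; apply Hno; exists x; split; auto. lra. }
    destruct H as [s' [[_ Hs'] Hus']]. apply Hs'. lra. }
  assert (Hcs : continuity_pt g s) by (apply (derive_cont g s (dg s)); apply Hd; lra).
  assert (C2 : g s <= g 0).
  { destruct (Rle_or_lt (g s) (g 0)) as [|Hgs]; [assumption|].
    destruct (Req_dec s 0) as [Hz|Hz]. { subst s. lra. }
    destruct (cont_eps g s Hcs (g s - g 0)) as [eta [Heta Hu]]; [lra|].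
    set (u := Rmax 0 (s - eta/2)).
    assert (Hu1 : 0 <= u < s). { unfold u. unfold Rmax. destruct (Rle_dec 0 (s - eta/2)); lra. }
    assert (Hu2 : Rabs (u - s) < eta). { unfold u, Rmax. destruct (Rle_dec 0 (s - eta/2)); apply Rabs_def1; lra. }
    specialize (Hu u Hu2). specialize (C1 u Hu1). apply Rabs_def2 in Hu. lra. }
  destruct (Rle_or_lt t1 s) as [Hts|Hst].
  { assert (s = t1) by lra. subst s. lra. }
  destruct (cont_eps g s Hcs (thr - g s)) as [eta [Heta Hu]]; [lra|].
  set (s2 := Rmin t1 (s + eta/2)).
  assert (Hs2 : s < s2 <= t1). { unfold s2, Rmin. destruct (Rle_dec t1 (s + eta/2)); lra. }
  assert (Hs2b : s2 - s < eta). { unfold s2, Rmin. destruct (Rle_dec t1 (s + eta/2)); lra. }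
  assert (E s2).
  { split. lra. intros u Hu'.
    destruct (Rlt_or_le u s) as [Hus|Hsu]. apply C1; lra.
    assert (g u <= g s).
    { apply (mono_nonpos g dg s u Hsu).
      - intros v Hv. apply Hd. lra.
      - intros v Hv. apply Hn. lra. specialize (Hu v). assert (Rabs (v - s) < eta) by (apply Rabs_def1; lra).
        apply Rabs_def2 in Hu; [lra|auto]. }
    lra. }
  assert (s2 <= s) by (apply Hub; auto). lra.
Qed.

Lemma small_close N e (V : (nat -> R) -> R) m x r :
  0 < m -> (forall x i, (i <= N)%nat -> m * (x i - e i)^2 <= V x) ->
  0 < r -> V x < m * r^2 -> Defs.close N r x e.
Proof.
  intros Hm HV Hr Hx i Hi. specialize (HV x i Hi).
  assert ((x i - e i)^2 < r^2).
  { apply Rmult_lt_reg_l with m; lra. }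
  destruct (Rle_or_lt r (Rabs (x i - e i))) as [Hc|Hc]; [|exact Hc].
  exfalso. assert (r * r <= Rabs (x i - e i) * Rabs (x i - e i)) by (apply Rmult_le_compat; lra).
  rewrite <- Rabs_mult in H0. rewrite Rabs_right in H0 by (apply Rle_ge; apply Rle_0_sqr). simpl in H. nra.
Qed.

Lemma lyap_LAS (F : (nat -> R) -> nat -> R) N e (V W : (nat -> R) -> R) m M al rho :
  (forall (x : R -> nat -> R) t, (forall i, (i <= N)%nat -> is_derive (fun s => x s i) t (F (x t) i)) ->
      is_derive (fun s => V (x s)) t (W (x t))) ->
  0 < m -> (forall x i, (i <= N)%nat -> m * (x i - e i)^2 <= V x) ->
  0 <= M -> (forall x d, 0 <= d -> Defs.close N d x e -> V x <= M * d^2) ->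
  0 < al -> 0 < rho -> (forall x, Defs.close N rho x e -> W x <= - al * V x) ->
  loc_asymp_stable F N e.
Proof.
  intros HD Hm HVm HM HVM Hal Hrho HW.
  assert (HV0 : forall x, 0 <= V x).
  { intros x. specialize (HVm x 0%nat (Nat.le_0_l _)). assert (0 <= m * (x 0%nat - e 0%nat)^2) by (apply Rmult_le_pos; [lra|apply pow2_ge_0]). lra. }
  assert (Hcore : forall r0, 0 < r0 -> r0 <= rho -> exists d, 0 < d /\
     forall T x, solution_on F N T x -> Defs.close N d (x 0) e ->
       V (x 0) < m * r0^2 /\ forall t, 0 <= t < T -> V (x t) <= V (x 0)).
  { intros r0 Hr0 Hr0r.
    exists (Rmin r0 (m * r0 / (M + 1))). split.
    { apply Rmin_pos. lra. apply Rdiv_lt_0_compat; nra. }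
    intros T x Hsol Hc.
    set (d := Rmin r0 (m * r0 / (M + 1))) in *.
    assert (Hd1 : d <= r0) by apply Rmin_l.
    assert (Hd2 : d <= m * r0 / (M + 1)) by apply Rmin_r.
    assert (Hdp : 0 < d) by (apply Rmin_pos; [lra| apply Rdiv_lt_0_compat; nra]).
    assert (Hd3 : d * (M + 1) <= m * r0).
    { apply Rmult_le_compat_r with (r := M + 1) in Hd2; [|lra].
      unfold Rdiv in Hd2. rewrite Rmult_assoc, Rinv_l, Rmult_1_r in Hd2 by lra. exact Hd2. }
    assert (HV0x : V (x 0) < m * r0 ^ 2).
    { specialize (HVM (x 0) d (Rlt_le _ _ Hdp) Hc). simpl in *.
      assert (d * (d * (M + 1)) <= d * (m * r0)) by (apply Rmult_le_compat_l; lra).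
      assert (d * (m * r0) <= r0 * (m * r0)) by (apply Rmult_le_compat_r; nra).
      assert (0 < d * d) by nra. nra. }
    split; [exact HV0x|].
    apply (barrier (fun s => V (x s)) (fun s => W (x s)) T (m * r0^2)).
    - intros t Ht. apply HD. intros i Hi. apply Hsol; auto.
    - exact HV0x.
    - intros t Ht Hlt. specialize (HW (x t)).
      assert (Defs.close N rho (x t) e).
      { intros i Hi. apply Rlt_le_trans with r0; [|lra]. apply (small_close N e V m (x t) r0 Hm HVm Hr0 Hlt). exact Hi. }
      specialize (HW H). specialize (HV0 (x t)). nra. }
  split.
  - intros eps Heps.
    destruct (Hcore (Rmin eps rho)) as [d [Hd Hd']].
    apply Rmin_pos; lra. apply Rmin_r.
    exists d. split; [exact Hd|]. intros T x Hsol Hc t Ht.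
    destruct (Hd' T x Hsol Hc) as [H0 H1].
    intros i Hi. apply Rlt_le_trans with (Rmin eps rho); [|apply Rmin_l].
    apply (small_close N e V m (x t) (Rmin eps rho) Hm HVm). apply Rmin_pos; lra.
    specialize (H1 t Ht). lra. exact Hi.
  - destruct (Hcore rho Hrho (Rle_refl _)) as [d [Hd Hd']].
    exists d. split; [exact Hd|]. intros x Hsol Hc i Hi.
    set (g0 := V (x 0)).
    assert (Hg : forall t, 0 <= t -> V (x t) <= g0 /\ V (x t) < m * rho^2).
    { intros t Ht. destruct (Hd' (t+1) x (Hsol (t+1)) Hc) as [H0 H1].
      specialize (H1 t (conj Ht (Rlt_plus_1 t))). unfold g0; split; lra. }
    assert (Hdec : forall t, 0 <= t -> V (x t) * exp (al * t) <= g0).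
    { intros t Ht.
      assert (V (x t) * exp (al * t) <= V (x 0) * exp (al * 0)).
      { apply (mono_nonpos (fun s => V (x s) * exp (al * s))
           (fun s => W (x s) * exp (al * s) + V (x s) * (al * exp (al * s))) 0 t Ht).
        - intros u Hu. apply (is_derive_mult (fun s => V (x s)) (fun s => exp (al * s))).
          + apply HD. intros j Hj. apply (Hsol (u+1)); auto. lra.
          + auto_derive; auto. ring.
          + intros; apply Rmult_comm.
        - intros u Hu. destruct (Hg u (proj1 Hu)) as [_ Hlt].
          assert (Defs.close N rho (x u) e) by (apply (small_close N e V m (x u) rho Hm HVm Hrho Hlt)).
          specialize (HW _ H). specialize (HV0 (x u)). pose proof (exp_pos (al * u)).
          nra. }
      rewrite Rmult_0_r, exp_0, Rmult_1_r in H. exact H. }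
    apply is_lim_spec. intros eps.
    assert (Hep : 0 < eps) by apply cond_pos.
    exists (g0 / (m * al * eps^2)). intros t Ht.
    assert (Hg0 : 0 <= g0) by apply HV0.
    assert (Hpos : 0 < m * al * eps ^ 2) by (simpl; repeat apply Rmult_lt_0_compat; lra).
    assert (Ht0 : 0 <= t).
    { apply Rle_trans with (g0 / (m * al * eps^2)); [|lra]. apply Rdiv_le_0_compat; lra. }
    assert (Htg : g0 < t * (m * al * eps^2)).
    { apply Rmult_lt_compat_r with (r := m * al * eps ^ 2) in Ht; [|lra].
      unfold Rdiv in Ht. rewrite Rmult_assoc, Rinv_l, Rmult_1_r in Ht by lra. lra. }
    specialize (Hdec t Ht0).
    assert (Hex : 1 + al * t <= exp (al * t)).
    { destruct (Req_dec (al * t) 0) as [Hz|Hz]. rewrite Hz, exp_0. lra. left. apply exp_ineq1. exact Hz. }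
    specialize (HVm (x t) i Hi). specialize (HV0 (x t)).
    assert (m * (x t i - e i) ^ 2 * (1 + al * t) <= g0).
    { apply Rle_trans with (V (x t) * exp (al * t)); [|exact Hdec].
      apply Rmult_le_compat; try lra.
      apply Rmult_le_pos; [lra|apply pow2_ge_0]. nra. }
    assert ((x t i - e i)^2 < eps^2).
    { set (z := (x t i - e i)^2) in *. set (q := eps^2) in *.
      assert (0 < q) by (unfold q; simpl; nra).
      destruct (Rlt_or_le z q) as [|Hzq]; [assumption|exfalso].
      assert (m * q * (1 + al * t) <= m * z * (1 + al * t)).
      { apply Rmult_le_compat_r. nra. apply Rmult_le_compat_l; lra. }
      assert (0 <= m * q) by nra. nra. }
    destruct (Rle_or_lt eps (Rabs (x t i - e i))) as [Hc'|Hc']; [|exact Hc'].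
    exfalso. assert (eps * eps <= Rabs (x t i - e i) * Rabs (x t i - e i)) by (apply Rmult_le_compat; lra).
    rewrite <- Rabs_mult in H1. rewrite Rabs_right in H1 by (apply Rle_ge; apply Rle_0_sqr). simpl in H0. nra.
Qed.


Fixpoint ssum (f : nat -> R) (k : nat) : R :=
  match k with O => 0 | S k => ssum f k + f k end.

Lemma ssum_S f k : ssum f (S k) = ssum f k + f k.
Proof. reflexivity. Qed.

Lemma sum_f_ssum f m : sum_f_R0 f m = ssum f (S m).
Proof. induction m; simpl in *. ring. rewrite IHm. ring. Qed.

Lemma ssum_ext f g k : (forall i, (i < k)%nat -> f i = g i) -> ssum f k = ssum g k.
Proof. induction k; intros H; simpl. auto. rewrite IHk, H; auto. Qed.

Lemma ssum_plus f g k : ssum (fun i => f i + g i) k = ssum f k + ssum g k.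
Proof. induction k; simpl. ring. rewrite IHk. ring. Qed.

Lemma ssum_minus f g k : ssum (fun i => f i - g i) k = ssum f k - ssum g k.
Proof. induction k; simpl. ring. rewrite IHk. ring. Qed.

Lemma ssum_scal a f k : ssum (fun i => a * f i) k = a * ssum f k.
Proof. induction k; simpl. ring. rewrite IHk. ring. Qed.

Lemma ssum_const a k : ssum (fun _ => a) k = INR k * a.
Proof. induction k; simpl ssum. simpl; ring. rewrite IHk, S_INR. ring. Qed.

Lemma ssum_le f g k : (forall i, (i < k)%nat -> f i <= g i) -> ssum f k <= ssum g k.
Proof. induction k; intros H; simpl. lra. apply Rplus_le_compat. apply IHk; auto. apply H; lia. Qed.

Lemma ssum_nonneg f k : (forall i, (i < k)%nat -> 0 <= f i) -> 0 <= ssum f k.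
Proof. intros H. replace 0 with (ssum (fun _ => 0) k). apply ssum_le; auto.
  induction k; simpl; auto. rewrite IHk; auto. ring. Qed.

Lemma ssum_shift f k : ssum f (S k) = f 0%nat + ssum (fun i => f (S i)) k.
Proof. induction k; simpl in *. ring. rewrite IHk. ring. Qed.

Lemma ssum_telescope g k : ssum (fun i => g i - g (S i)) k = g 0%nat - g k.
Proof. induction k; simpl. ring. rewrite IHk. ring. Qed.

Lemma ssum_single f k j : (forall i, (i < k)%nat -> 0 <= f i) -> (j < k)%nat -> f j <= ssum f k.
Proof.
  induction k; intros H Hj. lia. simpl.
  destruct (Nat.eq_dec j k). subst. assert (0 <= ssum f k) by (apply ssum_nonneg; auto). lra.
  assert (f j <= ssum f k) by (apply IHk; auto; lia). assert (0 <= f k) by auto. lra.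
Qed.

Lemma ssum_abs f k : Rabs (ssum f k) <= ssum (fun i => Rabs (f i)) k.
Proof. induction k; simpl. rewrite Rabs_R0; lra.
  eapply Rle_trans. apply Rabs_triang. lra. Qed.

Lemma ssum_cs f k : (ssum f k)^2 <= INR k * ssum (fun i => (f i)^2) k.
Proof.
  induction k. simpl. lra.
  rewrite !ssum_S. rewrite S_INR.
  assert (H2 : 2 * f k * ssum f k <= INR k * (f k)^2 + ssum (fun i => (f i)^2) k).
  { rewrite <- ssum_const, <- ssum_plus.
    replace (2 * f k * ssum f k) with (ssum (fun i => 2 * f k * f i) k) by (rewrite ssum_scal; ring).
    apply ssum_le. intros i _. cbv beta. pose proof (pow2_ge_0 (f k - f i)). simpl in *. nra. }
  assert (0 <= ssum (fun i => (f i)^2) k) by (apply ssum_nonneg; intros; apply pow2_ge_0).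
  pose proof (pos_INR k). set (Q := ssum (fun i => (f i)^2) k) in *. set (S0 := ssum f k) in *. nra.
Qed.

Lemma is_derive_ssum (f : R -> nat -> R) (df : nat -> R) t k :
  (forall i, (i < k)%nat -> is_derive (fun s => f s i) t (df i)) ->
  is_derive (fun s => ssum (f s) k) t (ssum df k).
Proof.
  induction k; intros H; simpl.
  - exact (is_derive_const (0:R) t).
  - exact (is_derive_plus (fun s => ssum (f s) k) (fun s => f s k) t _ _ (IHk (fun i Hi => H i (Nat.lt_lt_succ_r _ _ Hi))) (H k (Nat.lt_succ_diag_r k))).
Qed.

Lemma ssum_decomp f n' :
  ssum f (S (S (S n'))) = f 0%nat + ssum (fun i => f (S i)) n' + f (S n') + f (S (S n')).
Proof. rewrite (ssum_shift f (S (S n'))). simpl. ring. Qed.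

Lemma ssum_decomp2 f n' :
  ssum f (S (S n')) = f 0%nat + ssum (fun i => f (S i)) n' + f (S n').
Proof. rewrite (ssum_shift f (S n')). simpl. ring. Qed.

Lemma ssum_prefix f k m : (k <= m)%nat -> (forall i, (i < m)%nat -> 0 <= f i) -> ssum f k <= ssum f m.
Proof.
  intros Hkm Hf. induction m. replace k with 0%nat by lia. lra.
  destruct (Nat.eq_dec k (S m)). subst; lra.
  simpl. assert (ssum f k <= ssum f m) by (apply IHm; [lia| intros; apply Hf; lia]).
  assert (0 <= f m) by (apply Hf; lia). lra.
Qed.


Section F.
End F.

Lemma field_0 n' d omega r mu p beta x :
  field (S n') d omega r mu p beta x 0%nat =
  ssum (fun k => om p omega (S k) * x (S k)) (S n') - d * x 0%nat + r * x (S (S n'))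
   - beta 0%nat * x (S (S n')) * x 0%nat - mu * x 0%nat.
Proof. unfold field. simpl Nat.eqb. cbv iota. rewrite sum_f_ssum. replace (S n' - 1)%nat with n' by lia. reflexivity. Qed.

Lemma field_mid n' d omega r mu p beta x k : (k < n')%nat ->
  field (S n') d omega r mu p beta x (S k) =
  - om p omega (S k) * x (S k) + de p d k * x k - de p d (S k) * x (S k)
   - beta (S k) * x (S (S n')) * x (S k) - mu * x (S k).
Proof. intros Hk. unfold field.
  replace (Nat.eqb (S k) 0) with false by reflexivity.
  replace (Nat.ltb (S k) (S n')) with true by (symmetry; apply Nat.ltb_lt; lia).
  replace (S k - 1)%nat with k by lia. reflexivity. Qed.

Lemma field_n n' d omega r mu p beta x :
  field (S n') d omega r mu p beta x (S n') =
  mu - om p omega (S n') * x (S n') + de p d n' * x n'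
   - beta (S n') * x (S (S n')) * x (S n') - mu * x (S n').
Proof. unfold field.
  replace (Nat.eqb (S n') 0) with false by reflexivity.
  replace (Nat.ltb (S n') (S n')) with false by (symmetry; apply Nat.ltb_ge; lia).
  replace (Nat.eqb (S n') (S n')) with true by (symmetry; apply Nat.eqb_eq; lia).
  replace (S n' - 1)%nat with n' by lia. reflexivity. Qed.

Lemma field_I n' d omega r mu p beta x :
  field (S n') d omega r mu p beta x (S (S n')) =
  x (S (S n')) * ssum (fun k => beta k * x k) (S (S n')) - r * x (S (S n')) - mu * x (S (S n')).
Proof. unfold field.
  replace (Nat.eqb (S (S n')) 0) with false by reflexivity.
  replace (Nat.ltb (S (S n')) (S n')) with false by (symmetry; apply Nat.ltb_ge; lia).
  replace (Nat.eqb (S (S n')) (S n')) with false by (symmetry; apply Nat.eqb_neq; lia).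
  replace (Nat.eqb (S (S n')) (S (S n'))) with true by (symmetry; apply Nat.eqb_eq; lia).
  rewrite sum_f_ssum. reflexivity. Qed.

Lemma field_sum n' d omega r mu p beta x : p 0%nat = 0 ->
  ssum (field (S n') d omega r mu p beta x) (S (S (S n'))) = mu - mu * ssum x (S (S (S n'))).
Proof.
  intros Hp0.
  rewrite ssum_decomp. rewrite field_0, field_n, field_I.
  rewrite (ssum_ext (fun k => field (S n') d omega r mu p beta x (S k)) (fun k => - om p omega (S k) * x (S k) + (de p d k * x k - de p d (S k) * x (S k))
   - beta (S k) * x (S (S n')) * x (S k) - mu * x (S k))).
  2:{ intros i Hi. cbv beta. rewrite field_mid by lia. ring. }
  rewrite !ssum_minus, ssum_plus, ssum_telescope.
  rewrite (ssum_ext (fun k => - om p omega (S k) * x (S k)) (fun k => -1 * (om p omega (S k) * x (S k)))) by (intros; ring).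
  rewrite (ssum_ext (fun k => beta (S k) * x (S (S n')) * x (S k)) (fun k => x (S (S n')) * (beta (S k) * x (S k)))) by (intros; ring).
  rewrite !ssum_scal.
  rewrite (ssum_S (fun k => om p omega (S k) * x (S k)) n').
  rewrite (ssum_decomp2 (fun k => beta k * x k)).
  rewrite (ssum_decomp x).
  unfold de. rewrite Hp0. ring.
Qed.


Lemma beta_mono n (beta : nat -> R) : (forall i, (i < n)%nat -> beta i <= beta (S i)) ->
  forall k, (k <= n)%nat -> beta 0%nat <= beta k /\ beta k <= beta n.
Proof.
  intros H k Hk. split.
  - induction k. lra. apply Rle_trans with (beta k). apply IHk; lia. apply H; lia.
  - assert (forall j k, (k + j = n)%nat -> beta k <= beta n).
    { induction j; intros k0 Hk0. replace k0 with n by lia. lra.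
      apply Rle_trans with (beta (S k0)). apply H; lia. apply IHj; lia. }
    apply (H0 (n - k)%nat). lia.
Qed.

Lemma om_bounds n (p : nat -> R) omega : 0 <= omega -> (forall i, (1 <= i <= n)%nat -> 0 <= p i <= 1) ->
  forall i, (1 <= i <= n)%nat -> 0 <= om p omega i <= omega.
Proof. intros Ho Hp i Hi. specialize (Hp i Hi). unfold om. split; nra. Qed.

Lemma de_bounds n (p : nat -> R) d : 0 <= d -> p 0%nat = 0 -> (forall i, (1 <= i <= n)%nat -> 0 <= p i <= 1) ->
  forall i, (i <= n)%nat -> 0 <= de p d i <= d.
Proof. intros Ho Hp0 Hp i Hi. unfold de. destruct i. rewrite Hp0. lra.
  specialize (Hp (S i)). assert (0 <= p (S i) <= 1) by (apply Hp; lia). split; nra. Qed.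

Lemma Rabs_def2b x y : Rabs x <= y -> -y <= x <= y.
Proof. unfold Rabs. destruct (Rcase_abs x); lra. Qed.

Lemma Rabs_le_mult_inv a b c : 0 < a -> a * Rabs b <= c -> Rabs b <= c / a.
Proof. intros Ha H. apply Rmult_le_reg_l with a. lra. field_simplify; lra. Qed.

Lemma eq_bounds n' omega r mu p beta d e :
  0 <= omega -> 0 < r -> 0 < mu -> p 0%nat = 0 ->
  (forall i : nat, (1 <= i <= S n')%nat -> 0 <= p i <= 1) ->
  0 <= beta 0%nat ->
  (forall i : nat, (i < S n')%nat -> beta i <= beta (S i)) ->
  0 <= d -> d <= mu -> d * omega * INR (S n') <= mu^2/2 -> d * (2*(omega+r)/mu) <= mu/2 ->
  endemic_eq (S n') d omega r mu p beta e ->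
  Rabs (e 0%nat) <= 2*(omega+r)/mu /\
  (forall k, (k <= n')%nat -> Rabs (e k) <= 2*(omega+r)/mu) /\
  (forall k, (k < n')%nat -> mu * Rabs (e (S k)) <= d * (2*(omega+r)/mu)) /\
  0 < e (S n') /\ e (S n') <= 2 /\
  mu <= 2 * e (S n') * (om p omega (S n') + beta (S n') + mu) /\
  e (S n') * (om p omega (S n') + beta (S n') * e (S (S n')) + mu) = mu + de p d n' * e n' /\
  ssum (fun k => beta k * e k) (S (S n')) = r + mu /\
  ssum e (S (S n')) = 1 - e (S (S n')).
Proof.
  intros Hom Hr Hmu Hp0 Hp Hb0 Hmono Hd Hdmu Hd2 Hd3 [Heq [Hsum HI]].
  set (I := e (S (S n'))) in *.
  set (M0 := 2*(omega+r)/mu) in *.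
  pose proof (beta_mono (S n') beta Hmono) as Hbm.
  pose proof (om_bounds (S n') p omega Hom Hp) as Hob.
  pose proof (de_bounds (S n') p d Hd Hp0 Hp) as Hdb.
  assert (HsumE : ssum e (S (S n')) = 1 - I).
  { rewrite sum_f_ssum in Hsum. fold I in Hsum. lra. }
  assert (HbE : ssum (fun k => beta k * e k) (S (S n')) = r + mu).
  { pose proof (Heq (S (S n')) (le_n _)) as H. rewrite field_I in H. fold I in H.
    set (Sb := ssum (fun k => beta k * e k) (S (S n'))) in *.
    assert (I * (Sb - r - mu) = 0) by lra.
    apply Rmult_integral in H0. destruct H0; lra. }
  assert (Hmid : forall k, (k < n')%nat ->
     e (S k) * (om p omega (S k) + de p d (S k) + beta (S k) * I + mu) = de p d k * e k).
  { intros k Hk. pose proof (Heq (S k) ltac:(lia)) as H. rewrite field_mid in H by lia. fold I in H. lra. }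
  assert (Hmid2 : forall k, (k < n')%nat -> mu * Rabs (e (S k)) <= d * Rabs (e k)).
  { intros k Hk. specialize (Hmid k Hk).
    assert (Ho1 := Hob (S k) ltac:(lia)). assert (Hd1 := Hdb (S k) ltac:(lia)). assert (Hd0 := Hdb k ltac:(lia)).
    assert (Hb1 := Hbm (S k) ltac:(lia)).
    assert (Hpos : mu <= om p omega (S k) + de p d (S k) + beta (S k) * I + mu).
    { assert (0 <= beta (S k) * I) by (apply Rmult_le_pos; lra). lra. }
    assert (Rabs (e (S k)) * (om p omega (S k) + de p d (S k) + beta (S k) * I + mu) = de p d k * Rabs (e k)).
    { rewrite <- (Rabs_right (om p omega (S k) + de p d (S k) + beta (S k) * I + mu)) by lra.
      rewrite <- (Rabs_right (de p d k)) by lra. rewrite <- !Rabs_mult. rewrite Hmid. reflexivity. }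
    pose proof (Rabs_pos (e (S k))). pose proof (Rabs_pos (e k)). nra. }
  assert (Hchain : forall k, (k <= n')%nat -> Rabs (e k) <= Rabs (e 0%nat)).
  { induction k; intros Hk. lra. specialize (Hmid2 k ltac:(lia)). specialize (IHk ltac:(lia)).
    pose proof (Rabs_pos (e k)). nra. }
  assert (Hmid3 : forall k, (k < n')%nat -> mu * Rabs (e (S k)) <= d * Rabs (e 0%nat)).
  { intros k Hk. specialize (Hmid2 k Hk). specialize (Hchain k ltac:(lia)). nra. }
  assert (Hn : e (S n') * (om p omega (S n') + beta (S n') * I + mu) = mu + de p d n' * e n').
  { pose proof (Heq (S n') ltac:(lia)) as H. rewrite field_n in H. fold I in H. lra. }
  assert (Hdn := Hdb n' ltac:(lia)). assert (Hon := Hob (S n') ltac:(lia)).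
  assert (Hbn := Hbm (S n') ltac:(lia)).
  assert (HDn : mu <= om p omega (S n') + beta (S n') * I + mu).
  { assert (0 <= beta (S n') * I) by (apply Rmult_le_pos; lra). lra. }
  assert (Hen : mu * Rabs (e (S n')) <= mu + d * Rabs (e 0%nat)).
  { assert (Rabs (e (S n')) * (om p omega (S n') + beta (S n') * I + mu) = Rabs (mu + de p d n' * e n')).
    { rewrite <- Hn. rewrite Rabs_mult. rewrite (Rabs_right (_ + _ + mu)) by lra. reflexivity. }
    assert (Rabs (mu + de p d n' * e n') <= mu + d * Rabs (e 0%nat)).
    { eapply Rle_trans. apply Rabs_triang. rewrite Rabs_right by lra. rewrite Rabs_mult, (Rabs_right (de p d n')) by lra.
      specialize (Hchain n' (le_n _)). pose proof (Rabs_pos (e n')). nra. }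
    pose proof (Rabs_pos (e (S n'))). nra. }
  assert (He0 : Rabs (e 0%nat) <= M0).
  { pose proof (Heq 0%nat ltac:(lia)) as H. rewrite field_0 in H. fold I in H.
    rewrite ssum_S in H.
    set (Sm := ssum (fun k => om p omega (S k) * e (S k)) n') in *.
    assert (HSm : mu * Rabs Sm <= INR n' * omega * d * Rabs (e 0%nat)).
    { unfold Sm. rewrite <- (Rabs_right mu) at 1 by lra. rewrite <- Rabs_mult, <- ssum_scal.
      eapply Rle_trans. apply ssum_abs.
      replace (INR n' * omega * d * Rabs (e 0%nat)) with (ssum (fun _ => omega * (d * Rabs (e 0%nat))) n')
        by (rewrite ssum_const; ring).
      apply ssum_le. intros i Hi. cbv beta.
      rewrite !Rabs_mult, Rabs_right by lra.
      specialize (Hmid3 i Hi). specialize (Hob (S i) ltac:(lia)). rewrite (Rabs_right (om p omega (S i))) by lra.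
      pose proof (Rabs_pos (e (S i))). assert (0 <= d * Rabs (e 0%nat)) by (apply Rmult_le_pos; [lra|apply Rabs_pos]). clear -Hmid3 Hob H0 H1 Hmu Hd Hom. nra. }
    assert (Heq0 : e 0%nat * (d + beta 0%nat * I + mu) = Sm + om p omega (S n') * e (S n') + r * I) by lra.
    assert (Habs : Rabs (e 0%nat) * (d + beta 0%nat * I + mu) <= Rabs Sm + omega * Rabs (e (S n')) + r).
    { rewrite <- (Rabs_right (d + beta 0%nat * I + mu)) by (assert (0 <= beta 0%nat * I) by (apply Rmult_le_pos; lra); lra).
      rewrite <- Rabs_mult, Heq0. eapply Rle_trans. apply Rabs_triang.
      eapply Rle_trans. apply Rplus_le_compat_r. apply Rabs_triang.
      rewrite Rabs_mult, (Rabs_right (om _ _ _)) by lra. rewrite Rabs_mult, (Rabs_right r) by lra.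
      rewrite (Rabs_right I) by lra. pose proof (Rabs_pos (e (S n'))). clear Heq Hbm Hob Hdb Hmid Hmid2 Hchain Hmid3. nra. }
    assert (mu * Rabs (e 0%nat) <= Rabs (e 0%nat) * (d + beta 0%nat * I + mu)).
    { assert (0 <= beta 0%nat * I) by (apply Rmult_le_pos; lra). pose proof (Rabs_pos (e 0%nat)). nra. }
    rewrite S_INR in Hd2.
    assert (mu * (mu * Rabs (e 0%nat)) <= (INR n' + 1) * omega * d * Rabs (e 0%nat) + mu * (omega + r)).
    { pose proof (Rabs_pos (e (S n'))). nra. }
    unfold M0. apply Rmult_le_reg_l with (mu * mu / 2). nra.
    field_simplify; [|lra]. pose proof (Rabs_pos (e 0%nat)). nra. }
  assert (HdM : d * Rabs (e 0%nat) <= mu / 2).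
  { apply Rle_trans with (d * M0). apply Rmult_le_compat_l; lra. exact Hd3. }
  assert (Hepos : 0 < e (S n')).
  { assert (Rabs (de p d n' * e n') <= mu / 2).
    { rewrite Rabs_mult, Rabs_right by lra. specialize (Hchain n' (le_n _)). pose proof (Rabs_pos (e n')). nra. }
    apply Rabs_def2b in H. 
    assert (0 < e (S n') * (om p omega (S n') + beta (S n') * I + mu)) by lra.
    destruct (Rle_or_lt (e (S n')) 0); [|assumption]. nra. }
  repeat split.
  - exact He0.
  - intros k Hk. specialize (Hchain k Hk). lra.
  - intros k Hk. specialize (Hmid3 k Hk). apply Rle_trans with (d * Rabs (e 0%nat)); [exact Hmid3|].
    apply Rmult_le_compat_l; lra.
  - exact Hepos.
  - rewrite Rabs_right in Hen by lra. nra.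
  - assert (Rabs (de p d n' * e n') <= mu / 2).
    { rewrite Rabs_mult, Rabs_right by lra. specialize (Hchain n' (le_n _)). pose proof (Rabs_pos (e n')). nra. }
    apply Rabs_def2b in H.
    assert (beta (S n') * I <= beta (S n')) by (assert (0 <= beta (S n')) by lra; nra). nra.
  - exact Hn.
  - exact HbE.
  - exact HsumE.
Qed.

Lemma eI_lower n' omega r mu p beta d e M0 :
  0 <= omega -> 0 < mu -> p 0%nat = 0 ->
  (forall i : nat, (1 <= i <= S n')%nat -> 0 <= p i <= 1) ->
  0 <= beta 0%nat ->
  (forall i : nat, (i < S n')%nat -> beta i <= beta (S i)) ->
  beta 0%nat < beta (S n') ->
  0 <= d -> 0 <= M0 ->
  (forall k, (k <= n')%nat -> Rabs (e k) <= M0) ->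
  (forall k, (k < n')%nat -> mu * Rabs (e (S k)) <= d * M0) ->
  0 < e (S n') -> e (S n') <= 2 -> 0 < e (S (S n')) ->
  e (S n') * (om p omega (S n') + beta (S n') * e (S (S n')) + mu) = mu + de p d n' * e n' ->
  ssum (fun k => beta k * e k) (S (S n')) = r + mu ->
  ssum e (S (S n')) = 1 - e (S (S n')) ->
  let D0 := om p omega (S n') + mu in
  let eta := beta 0%nat * om p omega (S n') + beta (S n') * mu - D0 * (mu + r) in
  d * M0 * (D0 * INR n' * beta (S n') + mu * (beta (S n') - beta 0%nat)) <= mu * eta / 2 ->
  eta / (2 * (beta 0%nat * D0 + 2 * (beta (S n') - beta 0%nat) * beta (S n'))) <= e (S (S n')).
Proof.
  intros Hom Hmu Hp0 Hp Hb0 Hmono Hbn Hd HM0 Hch Hmid Hen Hen2 HI Hn HbE HsE D0 eta Hcond.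
  set (I := e (S (S n'))) in *.
  pose proof (beta_mono (S n') beta Hmono) as Hbm.
  pose proof (om_bounds (S n') p omega Hom Hp) as Hob.
  pose proof (de_bounds (S n') p d Hd Hp0 Hp) as Hdb.
  set (gn := beta (S n') - beta 0%nat).
  assert (Hdec : ssum (fun k => beta k * e k) (S (S n')) =
     beta 0%nat * ssum e (S (S n')) + ssum (fun k => (beta (S k) - beta 0%nat) * e (S k)) n' + gn * e (S n')).
  { rewrite !ssum_decomp2.
    replace (ssum (fun i => beta (S i) * e (S i)) n') with
      (beta 0%nat * ssum (fun i => e (S i)) n' + ssum (fun k => (beta (S k) - beta 0%nat) * e (S k)) n').
    unfold gn. ring.
    rewrite <- ssum_scal, <- ssum_plus. apply ssum_ext. intros; ring. }
  set (Mid := ssum (fun k => (beta (S k) - beta 0%nat) * e (S k)) n') in *.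
  assert (HMid : - (INR n' * beta (S n') * d * M0) <= mu * Mid).
  { assert (Rabs (mu * Mid) <= INR n' * beta (S n') * d * M0).
    { unfold Mid. rewrite <- ssum_scal. eapply Rle_trans. apply ssum_abs.
      replace (INR n' * beta (S n') * d * M0) with (ssum (fun _ => beta (S n') * (d * M0)) n')
        by (rewrite ssum_const; ring).
      apply ssum_le. intros i Hi. cbv beta.
      specialize (Hbm (S i) ltac:(lia)). specialize (Hmid i Hi).
      rewrite !Rabs_mult, (Rabs_right mu) by lra. rewrite (Rabs_right (beta (S i) - beta 0%nat)) by lra.
      pose proof (Rabs_pos (e (S i))).
      assert (0 <= beta (S i) - beta 0%nat <= beta (S n')) by lra.
      assert (0 <= d * M0) by (apply Rmult_le_pos; lra). clear -H H0 H1 Hmid Hmu. nra. }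
    apply Rabs_def2b in H. lra. }
  assert (Hdn := Hdb n' ltac:(lia)).
  assert (Hden : Rabs (de p d n' * e n') <= d * M0).
  { rewrite Rabs_mult, (Rabs_right (de p d n')) by lra. specialize (Hch n' (le_n _)). pose proof (Rabs_pos (e n')).
    clear -Hdn Hch H HM0. nra. }
  apply Rabs_def2b in Hden.
  assert (HenD0 : e (S n') * D0 = mu + de p d n' * e n' - beta (S n') * I * e (S n')).
  { unfold D0. lra. }
  assert (Hgn : 0 < gn) by (unfold gn; lra).
  assert (Hbn0 : 0 < beta (S n')) by lra.
  assert (HD0 : 0 < D0) by (unfold D0; specialize (Hob (S n') ltac:(lia)); lra).
  rewrite Hdec, HsE in HbE.
  assert (Hmain : mu * eta <= mu * I * (beta 0%nat * D0 + 2 * gn * beta (S n')) + d * M0 * (D0 * INR n' * beta (S n') + mu * gn)).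
  { assert (E1 : mu * D0 * (r + mu) = mu * D0 * beta 0%nat * (1 - I) + D0 * (mu * Mid) + mu * gn * (e (S n') * D0)).
    { rewrite <- HbE. ring. }
    rewrite HenD0 in E1.
    assert (E2 : beta 0%nat * om p omega (S n') + beta (S n') * mu = beta 0%nat * D0 + gn * mu) by (unfold D0, gn; ring).
    unfold eta. rewrite E2.
    assert (D0 * (mu * Mid) >= - (D0 * (INR n' * beta (S n') * d * M0))).
    { clear -HMid HD0. nra. }
    assert (mu * gn * (beta (S n') * I * e (S n')) <= mu * gn * (beta (S n') * I * 2)).
    { apply Rmult_le_compat_l. nra. apply Rmult_le_compat_l. nra. lra. }
    assert (mu * gn * (de p d n' * e n') >= - (mu * gn * (d * M0))).
    { assert (Hmg : 0 <= mu * gn) by nra. clear -Hden Hmg. nra. }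
    clear -E1 H H0 H1. nra. }
  assert (Hcoef : 0 < beta 0%nat * D0 + 2 * gn * beta (S n')).
  { assert (0 <= beta 0%nat * D0) by nra. nra. }
  apply Rmult_le_reg_l with (2 * (beta 0%nat * D0 + 2 * gn * beta (S n'))). lra.
  field_simplify; [|lra].
  unfold gn in *. clear -Hmain Hcond Hmu HI. nra.
Qed.


Lemma cR_plus (f g : R -> R) x : continuous f x -> continuous g x -> continuous (fun y => f y + g y) x.
Proof. intros; exact (continuous_plus f g x H H0). Qed.
Lemma cR_minus (f g : R -> R) x : continuous f x -> continuous g x -> continuous (fun y => f y - g y) x.
Proof. intros; exact (continuous_minus f g x H H0). Qed.
Lemma cR_mult (f g : R -> R) x : continuous f x -> continuous g x -> continuous (fun y => f y * g y) x.
Proof. intros; exact (continuous_mult f g x H H0). Qed.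
Lemma cR_const (c : R) x : continuous (fun _ : R => c) x.
Proof. exact (continuous_const c x). Qed.
Lemma cR_id x : continuous (fun y : R => y) x.
Proof. exact (continuous_id x). Qed.
Lemma cR_abs x : continuous (fun y : R => Rabs y) x.
Proof. exact (continuous_Rabs x). Qed.
Lemma cR_div (f g : R -> R) x : continuous f x -> continuous g x -> g x <> 0 -> continuous (fun y => f y / g y) x.
Proof. intros. apply cR_mult; auto. exact (continuous_Rinv_comp g x H0 H1). Qed.
Lemma cR_ssum (f : nat -> R -> R) k x : (forall i, (i < k)%nat -> continuous (f i) x) ->
  continuous (fun y => ssum (fun i => f i y) k) x.
Proof. induction k; intros H; simpl. apply cR_const. apply cR_plus. apply IHk; auto. apply H; lia. Qed.

Section Exist.
Variables (n' : nat) (omega r mu d : R) (p beta : nat -> R).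
Hypothesis Hom : 0 <= omega.
Hypothesis Hr : 0 < r.
Hypothesis Hmu : 0 < mu.
Hypothesis Hp0 : p 0%nat = 0.
Hypothesis Hp : forall i : nat, (1 <= i <= S n')%nat -> 0 <= p i <= 1.
Hypothesis Hb0 : 0 <= beta 0%nat.
Hypothesis Hmono : forall i : nat, (i < S n')%nat -> beta i <= beta (S i).
Hypothesis Hbn : beta 0%nat < beta (S n').
Hypothesis Hd : 0 <= d.
Hypothesis Hcond : (om p omega (S n') + mu) * (mu + r) < beta 0%nat * om p omega (S n') + beta (S n') * mu.

Definition Dm k I := om p omega (S k) + de p d (S k) + beta (S k) * Rabs I + mu.
Definition Dn I := om p omega (S n') + beta (S n') * Rabs I + mu.
Fixpoint qq k I := match k with O => 1 | S k => de p d k * qq k I / Dm k I end.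
Definition Qs I := ssum (fun k => qq k I) (S n') + de p d n' * qq n' I / Dn I.
Definition sg I := (1 - Rabs I - mu / Dn I) / Qs I.
Definition ev I k := if Nat.leb k n' then qq k I * sg I
  else if Nat.eqb k (S n') then (mu + de p d n' * qq n' I * sg I) / Dn I else Rabs I.
Definition Gf I := ssum (fun k => beta k * ev I k) (S (S n')) - r - mu.

Let Hbm := beta_mono (S n') beta Hmono.
Let Hob := om_bounds (S n') p omega Hom Hp.
Let Hdb := de_bounds (S n') p d Hd Hp0 Hp.

Lemma Dm_pos k I : (k < n')%nat -> mu <= Dm k I.
Proof. intros Hk. unfold Dm. assert (H1 := Hob (S k) ltac:(lia)). assert (H2 := Hdb (S k) ltac:(lia)).
  assert (H3 := Hbm (S k) ltac:(lia)). assert (0 <= beta (S k) * Rabs I) by (apply Rmult_le_pos; [lra|apply Rabs_pos]). lra. Qed.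

Lemma Dn_pos I : mu <= Dn I.
Proof. unfold Dn. assert (H1 := Hob (S n') ltac:(lia)).
  assert (H3 := Hbm (S n') ltac:(lia)). assert (0 <= beta (S n') * Rabs I) by (apply Rmult_le_pos; [lra|apply Rabs_pos]). lra. Qed.

Lemma qq_nonneg k I : (k <= n')%nat -> 0 <= qq k I.
Proof. induction k; intros Hk; simpl. lra.
  assert (H1 := Hdb k ltac:(lia)). assert (H2 := Dm_pos k I ltac:(lia)).
  apply Rmult_le_pos. apply Rmult_le_pos. lra. apply IHk; lia. left; apply Rinv_0_lt_compat; lra. Qed.

Lemma Qs_ge1 I : 1 <= Qs I.
Proof. unfold Qs. rewrite ssum_shift. simpl qq at 1.
  assert (0 <= ssum (fun i => qq (S i) I) n') by (apply ssum_nonneg; intros; apply qq_nonneg; lia).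
  assert (0 <= de p d n' * qq n' I / Dn I).
  { assert (H1 := Hdb n' ltac:(lia)). assert (H2 := Dn_pos I). assert (H3 := qq_nonneg n' I (le_n _)).
    apply Rmult_le_pos. apply Rmult_le_pos; lra. left; apply Rinv_0_lt_compat; lra. }
  lra. Qed.

Lemma Dm_cont k I : continuous (Dm k) I.
Proof. unfold Dm. apply cR_plus; [|apply cR_const]. apply cR_plus; [apply cR_const|]. apply cR_mult; [apply cR_const|apply cR_abs]. Qed.

Lemma Dn_cont I : continuous Dn I.
Proof. unfold Dn. apply cR_plus; [|apply cR_const]. apply cR_plus; [apply cR_const|]. apply cR_mult; [apply cR_const|apply cR_abs]. Qed.

Lemma qq_cont k I : (k <= n')%nat -> continuous (qq k) I.
Proof. induction k; intros Hk; simpl. apply cR_const.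
  apply cR_div. apply cR_mult. apply cR_const. apply IHk; lia. apply Dm_cont.
  assert (H2 := Dm_pos k I ltac:(lia)). lra. Qed.

Lemma Qs_cont I : continuous Qs I.
Proof. unfold Qs. apply cR_plus. apply (cR_ssum (fun k I => qq k I)). intros; apply qq_cont; lia.
  apply cR_div. apply cR_mult. apply cR_const. apply qq_cont; lia. apply Dn_cont. assert (H2 := Dn_pos I). lra. Qed.

Lemma sg_cont I : continuous sg I.
Proof. unfold sg. apply cR_div. apply cR_minus. apply cR_minus. apply cR_const. apply cR_abs.
  apply cR_div. apply cR_const. apply Dn_cont. assert (H2 := Dn_pos I). lra.
  apply Qs_cont. assert (H2 := Qs_ge1 I). lra. Qed.

Lemma ev_cont k I : continuous (fun J => ev J k) I.
Proof. unfold ev. destruct (Nat.leb k n') eqn:E1.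
  - apply cR_mult. apply qq_cont. apply Nat.leb_le; auto. apply sg_cont.
  - destruct (Nat.eqb k (S n')). apply cR_div. apply cR_plus. apply cR_const. apply cR_mult. apply cR_mult.
    apply cR_const. apply qq_cont; lia. apply sg_cont. apply Dn_cont. assert (H2 := Dn_pos I). lra.
    apply cR_abs. Qed.

Lemma Gf_cont I : continuity_pt Gf I.
Proof. apply continuity_pt_filterlim. change (continuous Gf I). unfold Gf. apply cR_minus. apply cR_minus. 2,3: apply cR_const.
  apply (cR_ssum (fun k J => beta k * ev J k)). intros i _. apply cR_mult. apply cR_const. apply ev_cont. Qed.

Lemma ev_low I k : (k <= n')%nat -> ev I k = qq k I * sg I.
Proof. intros Hk. unfold ev. replace (Nat.leb k n') with true by (symmetry; apply Nat.leb_le; lia). reflexivity. Qed.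

Lemma ev_n I : ev I (S n') = (mu + de p d n' * qq n' I * sg I) / Dn I.
Proof. unfold ev. replace (Nat.leb (S n') n') with false by (symmetry; apply Nat.leb_gt; lia).
  replace (Nat.eqb (S n') (S n')) with true by (symmetry; apply Nat.eqb_eq; lia). reflexivity. Qed.

Lemma ev_I I : ev I (S (S n')) = Rabs I.
Proof. unfold ev. replace (Nat.leb (S (S n')) n') with false by (symmetry; apply Nat.leb_gt; lia).
  replace (Nat.eqb (S (S n')) (S n')) with false by (symmetry; apply Nat.eqb_neq; lia). reflexivity. Qed.

Lemma ev_sum I : ssum (ev I) (S (S n')) = 1 - Rabs I.
Proof.
  rewrite ssum_S. rewrite (ssum_ext _ (fun k => sg I * qq k I)).
  2:{ intros i Hi. rewrite ev_low by lia. ring. }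
  rewrite ssum_scal, ev_n.
  assert (H1 := Qs_ge1 I). assert (H2 := Dn_pos I). unfold sg, Qs in *.
  assert (E : ssum (fun k => qq k I) (S n') * Dn I + de p d n' * qq n' I
     = (ssum (fun k => qq k I) (S n') + de p d n' * qq n' I / Dn I) * Dn I) by (field; lra).
  field. split. lra. rewrite E. nra.
Qed.

Lemma sum_beta_decomp (e : nat -> R) :
  ssum (fun k => beta k * e k) (S (S n')) =
     beta 0%nat * ssum e (S (S n')) + ssum (fun k => (beta (S k) - beta 0%nat) * e (S k)) n' + (beta (S n') - beta 0%nat) * e (S n').
Proof. rewrite !ssum_decomp2.
    replace (ssum (fun i => beta (S i) * e (S i)) n') with
      (beta 0%nat * ssum (fun i => e (S i)) n' + ssum (fun k => (beta (S k) - beta 0%nat) * e (S k)) n').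
    ring.
    rewrite <- ssum_scal, <- ssum_plus. apply ssum_ext. intros; ring. Qed.

Lemma Gf_0 : 0 < Gf 0.
Proof.
  unfold Gf. rewrite sum_beta_decomp, ev_sum, Rabs_R0.
  assert (Hs : 0 <= sg 0).
  { unfold sg. rewrite Rabs_R0. assert (H1 := Qs_ge1 0). assert (H2 := Dn_pos 0).
    apply Rmult_le_pos. assert (mu / Dn 0 <= 1). { apply Rmult_le_reg_r with (Dn 0). lra. field_simplify; lra. } lra.
    left; apply Rinv_0_lt_compat; lra. }
  assert (Hm : 0 <= ssum (fun k => (beta (S k) - beta 0%nat) * ev 0 (S k)) n').
  { apply ssum_nonneg. intros i Hi. rewrite ev_low by lia. assert (H := Hbm (S i) ltac:(lia)).
    assert (H2 := qq_nonneg (S i) 0 ltac:(lia)). apply Rmult_le_pos. lra. apply Rmult_le_pos; lra. }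
  rewrite ev_n.
  assert (HD0 : Dn 0 = om p omega (S n') + mu) by (unfold Dn; rewrite Rabs_R0; ring).
  assert (H2 := Dn_pos 0). assert (H3 := qq_nonneg n' 0 (le_n _)). assert (H4 := Hdb n' ltac:(lia)).
  assert (Hen : mu / Dn 0 <= (mu + de p d n' * qq n' 0 * sg 0) / Dn 0).
  { unfold Rdiv. apply Rmult_le_compat_r. left; apply Rinv_0_lt_compat; lra.
    assert (0 <= de p d n' * qq n' 0 * sg 0) by (apply Rmult_le_pos; [apply Rmult_le_pos|]; lra). lra. }
  assert (Hg : 0 <= beta (S n') - beta 0%nat) by lra.
  assert (Hkey : r + mu < beta 0%nat + (beta (S n') - beta 0%nat) * (mu / Dn 0)).
  { apply Rmult_lt_reg_r with (Dn 0). lra. field_simplify; [|lra]. rewrite HD0. nra. }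
  assert ((beta (S n') - beta 0%nat) * (mu / Dn 0) <= (beta (S n') - beta 0%nat) * ((mu + de p d n' * qq n' 0 * sg 0) / Dn 0))
    by (apply Rmult_le_compat_l; lra).
  lra.
Qed.

Lemma Gf_1 : Gf 1 < 0.
Proof.
  unfold Gf. rewrite sum_beta_decomp, ev_sum, Rabs_R1.
  assert (H1 := Qs_ge1 1). assert (H2 := Dn_pos 1).
  assert (Hs : sg 1 <= 0).
  { unfold sg. rewrite Rabs_R1. 
    assert (0 < mu / Dn 1) by (apply Rdiv_lt_0_compat; lra).
    unfold Rdiv at 1. assert (0 < / Qs 1) by (apply Rinv_0_lt_compat; lra). nra. }
  assert (Hm : ssum (fun k => (beta (S k) - beta 0%nat) * ev 1 (S k)) n' <= 0).
  { replace 0 with (ssum (fun _ => 0) n') by (rewrite ssum_const; ring). apply ssum_le.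
    intros i Hi. rewrite ev_low by lia. assert (H := Hbm (S i) ltac:(lia)).
    assert (H3 := qq_nonneg (S i) 1 ltac:(lia)). assert (0 <= beta (S i) - beta 0%nat) by lra.
    assert (qq (S i) 1 * sg 1 <= 0) by nra. nra. }
  rewrite ev_n.
  assert (H3 := qq_nonneg n' 1 (le_n _)). assert (H4 := Hdb n' ltac:(lia)).
  assert (Hen : (mu + de p d n' * qq n' 1 * sg 1) / Dn 1 <= mu / Dn 1).
  { unfold Rdiv. apply Rmult_le_compat_r. left; apply Rinv_0_lt_compat; lra.
    assert (0 <= de p d n' * qq n' 1) by (apply Rmult_le_pos; lra).
    assert (de p d n' * qq n' 1 * sg 1 <= 0) by nra. lra. }
  assert (HD1 : Dn 1 = om p omega (S n') + beta (S n') + mu) by (unfold Dn; rewrite Rabs_R1; ring).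
  assert (Hg : 0 <= beta (S n') - beta 0%nat) by lra.
  assert (Hon := Hob (S n') ltac:(lia)).
  assert (Hkey : (beta (S n') - beta 0%nat) * (mu / Dn 1) < mu).
  { apply Rmult_lt_reg_r with (Dn 1). lra. field_simplify; [|lra]. rewrite HD1. nra. }
  assert ((beta (S n') - beta 0%nat) * ((mu + de p d n' * qq n' 1 * sg 1) / Dn 1) <= (beta (S n') - beta 0%nat) * (mu / Dn 1))
    by (apply Rmult_le_compat_l; lra).
  nra.
Qed.

Lemma exists_endemic : exists e, endemic_eq (S n') d omega r mu p beta e.
Proof.
  destruct (IVT (fun I => - Gf I) 0 1) as [z [Hz HGz]].
  - intros x. apply continuity_pt_opp. apply Gf_cont.
  - lra.
  - pose proof Gf_0. lra.
  - pose proof Gf_1. lra.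
  - assert (HG : Gf z = 0) by lra. clear HGz.
    assert (Hz0 : z <> 0) by (intros ->; pose proof Gf_0; lra).
    assert (Haz : Rabs z = z) by (apply Rabs_right; lra).
    exists (ev z). split; [|split].
    + intros i Hi.
      destruct i as [|i].
      * (* S_0 equation via the total sum *)
        pose proof (field_sum n' d omega r mu p beta (ev z) Hp0) as Hs.
        rewrite (ssum_S (ev z)), ev_sum, ev_I in Hs.
        rewrite ssum_decomp in Hs.
        rewrite (ssum_ext _ (fun _ => 0)) in Hs.
        2:{ intros k Hk. cbv beta. rewrite field_mid by lia. rewrite ev_I, !ev_low by lia.
            simpl qq. assert (H := Dm_pos k z Hk). unfold Dm in *. rewrite Haz in *. field. lra. }
        rewrite ssum_const in Hs.
        rewrite field_n, field_I, ev_I, ev_n, ev_low in Hs by lia.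
        assert (Hsb := HG). unfold Gf in Hsb.
        assert (H2 := Dn_pos z). unfold Dn in *. rewrite Haz in *.
        replace (ssum (fun k => beta k * ev z k) (S (S n'))) with (r + mu) in Hs by lra.
        field_simplify in Hs; [|lra]. 
        set (F0 := field (S n') d omega r mu p beta (ev z) 0) in *.
        unfold Rdiv in Hs. apply Rmult_integral in Hs. destruct Hs as [Hs|Hs].
        { replace (F0 * mu + F0 * om p omega (S n') + F0 * beta (S n') * z) with
             (F0 * (mu + om p omega (S n') + beta (S n') * z)) in Hs by ring.
          apply Rmult_integral in Hs. destruct Hs as [Hs|Hs]; [exact Hs|lra]. }
        { exfalso. revert Hs. apply Rinv_neq_0_compat. lra. }
      * destruct (Nat.lt_ge_cases i n') as [Hin|Hin].
        -- rewrite field_mid by lia. rewrite ev_I, !ev_low by lia.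
           simpl qq. assert (H := Dm_pos i z Hin). unfold Dm in *. rewrite Haz in *. field. lra.
        -- destruct (Nat.eq_dec i n') as [->|Hne].
           ++ rewrite field_n, ev_I, ev_n, ev_low by lia. assert (H2 := Dn_pos z). unfold Dn in *. rewrite Haz in *.
              field. lra.
           ++ replace (S i) with (S (S n')) by lia. rewrite field_I, ev_I. unfold Gf in HG. rewrite Haz.
              replace (ssum (fun k => beta k * ev z k) (S (S n'))) with (r + mu) by lra. ring.
    + rewrite sum_f_ssum, ev_sum, ev_I. lra.
    + rewrite ev_I. lra.
Qed.

End Exist.


Lemma quad_neg P R S x y : P < 0 -> S^2 <= P * R -> P * x^2 + R * y^2 + 2 * S * x * y <= 0.
Proof. intros HP HS.
  assert (H1 : 0 <= (P * x + S * y)^2) by apply pow2_ge_0.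
  assert (H2 : 0 <= (P * R - S^2) * y^2) by (apply Rmult_le_pos; [lra|apply pow2_ge_0]).
  assert (P * (P * x^2 + R * y^2 + 2 * S * x * y) = (P * x + S * y)^2 + (P * R - S^2) * y^2) by ring.
  nra. Qed.

Lemma young_abs s u v M : Rabs s <= M -> s * u * v <= M * (u^2 + v^2) / 2.
Proof. intros H.
  assert (H0 : 0 <= M) by (pose proof (Rabs_pos s); lra).
  assert (H1 : s * u * v <= Rabs s * (Rabs u * Rabs v)).
  { rewrite <- !Rabs_mult. rewrite Rmult_assoc. apply Rle_abs. }
  rewrite <- (pow2_abs u), <- (pow2_abs v).
  pose proof (Rabs_pos u). pose proof (Rabs_pos v).
  set (a := Rabs u) in *. set (bb := Rabs v) in *. set (sa := Rabs s) in *.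
  assert (0 <= (a - bb)^2) by apply pow2_ge_0.
  assert (sa * (a * bb) <= M * (a * bb)) by (apply Rmult_le_compat_r; nra).
  nra. Qed.

Lemma young_lam X P lam : 0 < lam -> X * P <= lam * X^2 + P^2 / (4 * lam).
Proof. intros Hl.
  assert (0 <= (2 * lam * X - P)^2) by apply pow2_ge_0.
  assert (X * P = (4 * lam * (X * P)) / (4 * lam)) by (field; lra).
  assert (lam * X^2 + P^2 / (4 * lam) = (4 * lam^2 * X^2 + P^2) / (4 * lam)) by (field; lra).
  rewrite H0, H1. unfold Rdiv. apply Rmult_le_compat_r. left; apply Rinv_0_lt_compat; lra. nra. Qed.

Lemma sq3 a b c : (a + b + c)^2 <= 3 * (a^2 + b^2 + c^2).
Proof. pose proof (pow2_ge_0 (a-b)). pose proof (pow2_ge_0 (b-c)). pose proof (pow2_ge_0 (a-c)). nra. Qed.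

Lemma sq2 a b : (a + b)^2 <= 2 * (a^2 + b^2).
Proof. pose proof (pow2_ge_0 (a-b)). nra. Qed.

Lemma sq_le_of_abs u M : Rabs u <= M -> u^2 <= M^2.
Proof. intros H. rewrite <- (pow2_abs u). pose proof (Rabs_pos u). nra. Qed.


Lemma is_derive_sq (f : R -> R) t df : is_derive f t df -> is_derive (fun s => (f s)^2) t (2 * f t * df).
Proof. intros H. eapply is_derive_eq. apply (is_derive_pow f 2 t df H). simpl. ring. Qed.

Lemma is_derive_prod (f g : R -> R) t df dg : is_derive f t df -> is_derive g t dg ->
  is_derive (fun s => f s * g s) t (df * g t + f t * dg).
Proof. intros H1 H2. exact (is_derive_mult f g t df dg H1 H2 (fun a b => Rmult_comm a b)). Qed.

Lemma is_derive_add (f g : R -> R) t df dg : is_derive f t df -> is_derive g t dg ->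
  is_derive (fun s => f s + g s) t (df + dg).
Proof. intros H1 H2. exact (is_derive_plus f g t df dg H1 H2). Qed.

Lemma is_derive_cmul (f : R -> R) t k df : is_derive f t df -> is_derive (fun s => k * f s) t (k * df).
Proof. intros H. exact (is_derive_scal f t k df H). Qed.

Lemma is_derive_subc (f : R -> R) t c df : is_derive f t df -> is_derive (fun s => f s - c) t df.
Proof. intros H. eapply is_derive_eq. exact (is_derive_minus f (fun _ => c) t df 0 H (is_derive_const c t)).
  unfold minus, plus, opp, zero; simpl. ring. Qed.

Section Lyap.
Variables (n' : nat) (omega r mu d : R) (p beta e : nat -> R).
Variables (L K b c eps : R).

Definition yv (x : nat -> R) k := x k - e k.
Definition Fx := field (S n') d omega r mu p beta.
Definition Vf (x : nat -> R) :=
  L * (ssum (yv x) (S (S (S n'))))^2 + K * ssum (fun k => (yv x (S k))^2) n'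
  + c * (yv x (S n'))^2 + b * (yv x (S (S n')))^2 + 2 * eps * yv x (S n') * yv x (S (S n')).
Definition Wf (x : nat -> R) :=
  2 * L * ssum (yv x) (S (S (S n'))) * ssum (fun k => Fx x k) (S (S (S n')))
  + K * ssum (fun k => 2 * yv x (S k) * Fx x (S k)) n'
  + (2 * c * yv x (S n') + 2 * eps * yv x (S (S n'))) * Fx x (S n')
  + (2 * b * yv x (S (S n')) + 2 * eps * yv x (S n')) * Fx x (S (S n')).

Lemma Vf_deriv (x : R -> nat -> R) t :
  (forall i, (i <= S (S n'))%nat -> is_derive (fun s => x s i) t (Fx (x t) i)) ->
  is_derive (fun s => Vf (x s)) t (Wf (x t)).
Proof.
  intros H.
  assert (Hy : forall i, (i <= S (S n'))%nat -> is_derive (fun s => yv (x s) i) t (Fx (x t) i)).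
  { intros i Hi. unfold yv. apply is_derive_subc. apply H; auto. }
  unfold Vf, Wf.
  eapply is_derive_eq.
  - apply is_derive_add. apply is_derive_add. apply is_derive_add. apply is_derive_add.
    + apply is_derive_cmul. apply is_derive_sq. apply (is_derive_ssum (fun s k => yv (x s) k)).
      intros i Hi. apply Hy. lia.
    + apply is_derive_cmul. apply (is_derive_ssum (fun s k => (yv (x s) (S k))^2)).
      intros i Hi. apply is_derive_sq. apply Hy. lia.
    + apply is_derive_cmul. apply is_derive_sq. apply Hy. lia.
    + apply is_derive_cmul. apply is_derive_sq. apply Hy. lia.
    + apply (is_derive_prod (fun s => 2 * eps * yv (x s) (S n'))). apply is_derive_cmul. apply Hy. lia. apply Hy. lia.
  - cbv beta. ring.
Qed.


Definition Uf (x : nat -> R) :=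
  (ssum (yv x) (S (S (S n'))))^2 + ssum (fun k => (yv x (S k))^2) n' + (yv x (S n'))^2 + (yv x (S (S n')))^2.
Definition Tf (x : nat -> R) := ssum (fun k => (yv x k)^2) (S (S (S n'))).

Lemma Mid_nonneg x : 0 <= ssum (fun k => (yv x (S k))^2) n'.
Proof. apply ssum_nonneg. intros; apply pow2_ge_0. Qed.

Lemma y_le_U x k : (k <= S (S n'))%nat -> (yv x k)^2 <= 3 * (INR n' + 2) * Uf x.
Proof.
  intros Hk. unfold Uf.
  set (w := ssum (yv x) (S (S (S n')))).
  set (Mid := ssum (fun k => (yv x (S k))^2) n').
  assert (HM := Mid_nonneg x). fold Mid in HM.
  pose proof (pow2_ge_0 w). pose proof (pow2_ge_0 (yv x (S n'))). pose proof (pow2_ge_0 (yv x (S (S n')))).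
  pose proof (pos_INR n').
  assert (HU : 0 <= w^2 + Mid + (yv x (S n'))^2 + (yv x (S (S n')))^2) by lra.
  destruct k as [|k].
  - assert (Hw : yv x 0%nat = w - ssum (fun i => yv x (S i)) (S n') - yv x (S (S n'))).
    { unfold w. rewrite ssum_shift. rewrite (ssum_S (fun i => yv x (S i)) (S n')). simpl. ring. }
    rewrite Hw.
    assert (Hcs := ssum_cs (fun i => yv x (S i)) (S n')).
    assert (Hsq : ssum (fun i => (yv x (S i))^2) (S n') = Mid + (yv x (S n'))^2) by (rewrite ssum_S; reflexivity).
    cbv beta in Hcs. rewrite Hsq, S_INR in Hcs.
    assert (H3 := sq3 w (- ssum (fun i => yv x (S i)) (S n')) (- yv x (S (S n')))).
    replace (w + - ssum (fun i => yv x (S i)) (S n') + - yv x (S (S n'))) with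
       (w - ssum (fun i => yv x (S i)) (S n') - yv x (S (S n'))) in H3 by ring.
    replace ((- ssum (fun i => yv x (S i)) (S n'))^2) with ((ssum (fun i => yv x (S i)) (S n'))^2) in H3 by ring.
    replace ((- yv x (S (S n')))^2) with ((yv x (S (S n')))^2) in H3 by ring.
    set (Sm := ssum (fun i => yv x (S i)) (S n')) in *.
    assert (Sm^2 <= (INR n' + 1) * (Mid + (yv x (S n'))^2 + w^2 + (yv x (S (S n')))^2)) by nra.
    nra.
  - destruct (Nat.lt_ge_cases k n') as [Hkn|Hkn].
    + assert ((yv x (S k))^2 <= Mid) by (apply (ssum_single (fun k => (yv x (S k))^2)); auto; intros; apply pow2_ge_0).
      nra.
    + destruct (Nat.eq_dec k n') as [->|Hne]. nra.
      replace (S k) with (S (S n')) by lia. nra.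
Qed.

Lemma T_le_U x : Tf x <= INR (S (S (S n'))) * (3 * (INR n' + 2) * Uf x).
Proof.
  unfold Tf. rewrite <- ssum_const. apply ssum_le. intros i Hi. apply y_le_U. lia.
Qed.

Lemma y_le_T x k : (k <= S (S n'))%nat -> (yv x k)^2 <= Tf x.
Proof. intros Hk. unfold Tf. apply (ssum_single (fun k => (yv x k)^2)). intros; apply pow2_ge_0. lia. Qed.

Lemma Mid_le_T x : ssum (fun k => (yv x (S k))^2) n' <= Tf x.
Proof. unfold Tf. rewrite ssum_shift. assert (0 <= (yv x 0%nat)^2) by apply pow2_ge_0.
  assert (ssum (fun k => (yv x (S k))^2) n' <= ssum (fun k => (yv x (S k))^2) (S (S n'))).
  { apply ssum_prefix. lia. intros; apply pow2_ge_0. } lra. Qed.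

Lemma low_le_T x : ssum (fun k => (yv x k)^2) n' <= Tf x.
Proof. unfold Tf. apply ssum_prefix. lia. intros; apply pow2_ge_0. Qed.

Lemma Vf_lower x : 1 <= L -> 1 <= K -> 0 <= eps -> eps <= c / 2 -> eps <= b / 2 ->
  Rmin 1 (Rmin (c/2) (b/2)) * Uf x <= Vf x.
Proof.
  intros HL HK He Hc Hb. unfold Vf, Uf.
  set (w := ssum (yv x) (S (S (S n')))).
  set (Mid := ssum (fun k => (yv x (S k))^2) n').
  assert (HM := Mid_nonneg x). fold Mid in HM.
  set (m0 := Rmin 1 (Rmin (c/2) (b/2))).
  assert (Hm1 : m0 <= 1) by apply Rmin_l.
  assert (Hm2 : m0 <= c/2) by (eapply Rle_trans; [apply Rmin_r|apply Rmin_l]).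
  assert (Hm3 : m0 <= b/2) by (eapply Rle_trans; [apply Rmin_r|apply Rmin_r]).
  set (u := yv x (S n')) in *. set (v := yv x (S (S n'))) in *.
  assert (H1 : 2 * eps * u * v >= - (c/2 * u^2 + b/2 * v^2)).
  { assert (0 <= eps * (u + v)^2) by (apply Rmult_le_pos; [lra|apply pow2_ge_0]).
    assert ((c/2 - eps) * u^2 >= 0) by (apply Rle_ge, Rmult_le_pos; [lra|apply pow2_ge_0]).
    assert ((b/2 - eps) * v^2 >= 0) by (apply Rle_ge, Rmult_le_pos; [lra|apply pow2_ge_0]).
    nra. }
  assert (m0 * w^2 <= L * w^2) by (apply Rmult_le_compat_r; [apply pow2_ge_0|lra]).
  assert (m0 * Mid <= K * Mid) by (apply Rmult_le_compat_r; lra).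
  assert (m0 * u^2 <= c/2 * u^2) by (apply Rmult_le_compat_r; [apply pow2_ge_0|lra]).
  assert (m0 * v^2 <= b/2 * v^2) by (apply Rmult_le_compat_r; [apply pow2_ge_0|lra]).
  nra.
Qed.

Lemma Vf_upper x dd : 0 <= L -> 0 <= K -> 0 <= c -> 0 <= b -> 0 <= eps -> 0 <= dd ->
  Defs.close (S (S n')) dd x e ->
  Vf x <= (L + K + c + b + eps) * ((INR (S (S (S n'))))^2 + INR n' + 2) * dd^2.
Proof.
  intros HL HK Hc Hb He Hdd Hcl. unfold Vf.
  assert (Hy : forall k, (k <= S (S n'))%nat -> (yv x k)^2 <= dd^2).
  { intros k Hk. apply sq_le_of_abs. left. apply Hcl. exact Hk. }
  assert (Hw : (ssum (yv x) (S (S (S n'))))^2 <= (INR (S (S (S n'))))^2 * dd^2).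
  { assert (Rabs (ssum (yv x) (S (S (S n')))) <= INR (S (S (S n'))) * dd).
    { eapply Rle_trans. apply ssum_abs. rewrite <- ssum_const. apply ssum_le. intros i Hi. left. apply Hcl. lia. }
    apply sq_le_of_abs in H. rewrite Rpow_mult_distr in H. exact H. }
  assert (HMid : ssum (fun k => (yv x (S k))^2) n' <= INR n' * dd^2).
  { rewrite <- ssum_const. apply ssum_le. intros i Hi. apply Hy. lia. }
  assert (HM := Mid_nonneg x).
  set (w := ssum (yv x) (S (S (S n')))) in *.
  set (Mid := ssum (fun k => (yv x (S k))^2) n') in *.
  assert (H1 := Hy (S n') ltac:(lia)). assert (H2 := Hy (S (S n')) ltac:(lia)).
  set (u := yv x (S n')) in *. set (v := yv x (S (S n'))) in *.
  assert (2 * eps * u * v <= eps * (u^2 + v^2)) by (pose proof (pow2_ge_0 (u - v)); nra).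
  set (NN := INR (S (S (S n')))) in *.
  assert (0 <= NN^2) by apply pow2_ge_0. pose proof (pos_INR n'). pose proof (pow2_ge_0 dd).
  assert (L * w^2 <= L * (NN^2 * dd^2)) by (apply Rmult_le_compat_l; lra).
  assert (K * Mid <= K * (INR n' * dd^2)) by (apply Rmult_le_compat_l; lra).
  assert (c * u^2 <= c * dd^2) by (apply Rmult_le_compat_l; lra).
  assert (b * v^2 <= b * dd^2) by (apply Rmult_le_compat_l; lra).
  assert (eps * (u^2 + v^2) <= eps * (2 * dd^2)) by (apply Rmult_le_compat_l; lra).
  assert (L * (NN^2*dd^2) <= L * ((NN^2 + INR n' + 2) * dd^2)) by (apply Rmult_le_compat_l; nra).
  assert (K * (INR n'*dd^2) <= K * ((NN^2 + INR n' + 2) * dd^2)) by (apply Rmult_le_compat_l; nra).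
  assert (c * dd^2 <= c * ((NN^2 + INR n' + 2) * dd^2)) by (apply Rmult_le_compat_l; nra).
  assert (b * dd^2 <= b * ((NN^2 + INR n' + 2) * dd^2)) by (apply Rmult_le_compat_l; nra).
  assert (eps * (2*dd^2) <= eps * ((NN^2 + INR n' + 2) * dd^2)) by (apply Rmult_le_compat_l; nra).
  nra.
Qed.


Lemma Fsum_x x : p 0%nat = 0 -> ssum e (S (S (S n'))) = 1 ->
  ssum (fun k => Fx x k) (S (S (S n'))) = - mu * ssum (yv x) (S (S (S n'))).
Proof. intros Hp0 HsE. unfold Fx. rewrite (ssum_ext _ (field (S n') d omega r mu p beta x)) by auto.
  rewrite field_sum by auto. unfold yv. rewrite ssum_minus, HsE. ring. Qed.

Lemma FI_x x : ssum (fun k => beta k * e k) (S (S n')) = r + mu ->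
  Fx x (S (S n')) = x (S (S n')) * ssum (fun k => beta k * yv x k) (S (S n')).
Proof. intros HbE. unfold Fx. rewrite field_I.
  rewrite (ssum_ext (fun k => beta k * yv x k) (fun k => beta k * x k - beta k * e k)) by (intros; unfold yv; ring).
  rewrite ssum_minus, HbE. ring. Qed.

Lemma Fn_x x : Fx e (S n') = 0 ->
  Fx x (S n') = - (om p omega (S n') + mu + beta (S n') * e (S (S n'))) * yv x (S n')
     - beta (S n') * e (S n') * yv x (S (S n')) + de p d n' * yv x n' - beta (S n') * yv x (S (S n')) * yv x (S n').
Proof. intros H. unfold Fx in *. rewrite field_n in *. unfold yv. lra. Qed.

Lemma Fmid_x x k : (k < n')%nat -> Fx e (S k) = 0 ->
  Fx x (S k) = - (om p omega (S k) + de p d (S k) + mu + beta (S k) * e (S (S n'))) * yv x (S k)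
     + de p d k * yv x k - beta (S k) * e (S k) * yv x (S (S n')) - beta (S k) * yv x (S (S n')) * yv x (S k).
Proof. intros Hk H. unfold Fx in *. rewrite field_mid in * by auto. unfold yv. lra. Qed.


Lemma W_bound x E rho lam c0 b0 :
  0 < mu -> 0 <= omega -> p 0%nat = 0 -> (forall i, (1 <= i <= S n')%nat -> 0 <= p i <= 1) ->
  0 <= beta 0%nat -> (forall i, (i < S n')%nat -> beta i <= beta (S i)) -> beta 0%nat < beta (S n') ->
  0 <= d -> 0 <= rho ->
  (forall i, (i <= S (S n'))%nat -> Fx e i = 0) ->
  ssum e (S (S (S n'))) = 1 ->
  ssum (fun k => beta k * e k) (S (S n')) = r + mu ->
  0 < e (S (S n')) <= 1 -> 0 <= e (S n') <= 2 ->
  0 <= E -> (forall k, (k < n')%nat -> Rabs (e (S k)) <= d * E) ->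
  b = beta (S n') * e (S n') -> c = (beta (S n') - beta 0%nat) * e (S (S n')) ->
  0 < c0 -> c0 <= c -> 0 < b0 -> b0 <= b ->
  0 < eps -> eps <= mu / 2 ->
  eps * (omega + mu + beta (S n') + beta 0%nat)^2 <= mu * c0 * b0 / 2 ->
  0 < lam -> 32 * lam * (beta (S n'))^2 <= eps * b0 / 2 -> 8 * lam * eps^2 <= mu * c0 / 4 ->
  (beta 0%nat)^2 / (2 * lam) + mu <= 2 * L * mu ->
  INR n' * (beta (S n'))^2 / (2 * lam) + mu <= 2 * K * mu -> 0 <= K ->
  (forall j, (j <= S (S n'))%nat -> Rabs (yv x j) <= rho) ->
  Wf x <= - (Rmin mu (Rmin (mu * c0 / 4) (eps * b0 / 2))) * Uf x
     + (d * (K * (2 + beta (S n') * E * (1 + INR n')) + 2 * (beta (S n') - beta 0%nat) + 2 * eps)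
        + rho * (2 * K * beta (S n') + beta (S n') * (2 * (beta (S n') - beta 0%nat) + 2 * eps)
                 + (32 * (beta (S n'))^2 + 8 * eps^2 + (INR n' + 2) * (beta (S n'))^2) / 2)) * Tf x.
Proof.
  intros Hmu Hom Hp0 Hp Hb0 Hmono Hbn Hd Hrho HeqE HsE HbE HI Hen HE Hmid Hbdef Hcdef Hc0 Hc0c Hb0p Hb0b
    Heps Heps2 Heps3 Hlam Hlam1 Hlam2 HL HK HK0 Hy.
  pose proof (beta_mono (S n') beta Hmono) as Hbm.
  pose proof (om_bounds (S n') p omega Hom Hp) as Hob.
  pose proof (de_bounds (S n') p d Hd Hp0 Hp) as Hdb.
  set (bn := beta (S n')) in *.
  set (g := bn - beta 0%nat) in *.
  set (eI := e (S (S n'))) in *.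
  assert (Hg : 0 < g) by (unfold g; lra).
  assert (HT : forall j, (j <= S (S n'))%nat -> (yv x j)^2 <= Tf x) by (intros; apply y_le_T; auto).
  assert (HMT := Mid_le_T x). assert (HLT := low_le_T x).
  assert (HMn := Mid_nonneg x).
  assert (HT0 : 0 <= Tf x) by (apply Rle_trans with ((yv x 0%nat)^2); [apply pow2_ge_0| apply HT; lia]).
  unfold Wf, Uf.
  rewrite Fsum_x by auto. rewrite FI_x by auto. rewrite Fn_x by (apply HeqE; lia).
  rewrite (ssum_ext (fun k => 2 * yv x (S k) * Fx x (S k))
     (fun k => 2 * yv x (S k) * (- (om p omega (S k) + de p d (S k) + mu + beta (S k) * eI) * yv x (S k)
     + de p d k * yv x k - beta (S k) * e (S k) * yv x (S (S n')) - beta (S k) * yv x (S (S n')) * yv x (S k))))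
    by (intros k Hk; rewrite Fmid_x by (auto; apply HeqE; lia); reflexivity).
  rewrite (sum_beta_decomp n' beta (yv x)).
  assert (Hw : ssum (yv x) (S (S n')) = ssum (yv x) (S (S (S n'))) - yv x (S (S n'))) by (rewrite (ssum_S (yv x) (S (S n'))); ring).
  assert (HSy := sum_beta_decomp n' beta (yv x)). rewrite Hw in HSy.
  rewrite Hw.
  set (w := ssum (yv x) (S (S (S n')))) in *.
  set (Mid := ssum (fun k => (yv x (S k))^2) n') in *.
  set (Low := ssum (fun k => (yv x k)^2) n') in *.
  set (G1 := ssum (fun k => (beta (S k) - beta 0%nat) * yv x (S k)) n').
  set (T := Tf x) in *.
  assert (Hmidsum : ssum (fun k => 2 * yv x (S k) * (- (om p omega (S k) + de p d (S k) + mu + beta (S k) * eI) * yv x (S k)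
     + de p d k * yv x k - beta (S k) * e (S k) * yv x (S (S n')) - beta (S k) * yv x (S (S n')) * yv x (S k))) n'
     <= -2 * mu * Mid + d * (Low + Mid) + bn * (d * E) * (Mid + INR n' * (yv x (S (S n')))^2) + 2 * bn * rho * Mid).
  { unfold Mid, Low.
    replace (-2 * mu * ssum (fun k => (yv x (S k))^2) n' + d * (ssum (fun k => (yv x k)^2) n' + ssum (fun k => (yv x (S k))^2) n')
       + bn * (d * E) * (ssum (fun k => (yv x (S k))^2) n' + INR n' * (yv x (S (S n')))^2) + 2 * bn * rho * ssum (fun k => (yv x (S k))^2) n')
     with (ssum (fun k => -2 * mu * (yv x (S k))^2 + d * ((yv x k)^2 + (yv x (S k))^2)
            + bn * (d * E) * ((yv x (S k))^2 + (yv x (S (S n')))^2) + 2 * bn * rho * (yv x (S k))^2) n')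
     by (rewrite !ssum_plus, !ssum_scal, ssum_plus, ssum_plus, ssum_const; ring).
    apply ssum_le. intros k Hk. cbv beta.
    assert (H1 := Hob (S k) ltac:(lia)). assert (H2 := Hdb (S k) ltac:(lia)). assert (H3 := Hdb k ltac:(lia)).
    assert (H4 := Hbm (S k) ltac:(lia)). assert (H5 := Hmid k Hk).
    assert (HyI := Hy (S (S n')) ltac:(lia)).
    set (u := yv x (S k)) in *. set (v := yv x k). set (z := yv x (S (S n'))) in *.
    assert (A : 2 * u * (- (om p omega (S k) + de p d (S k) + mu + beta (S k) * eI) * u) <= -2 * mu * u^2).
    { assert (0 <= beta (S k) * eI) by (apply Rmult_le_pos; lra).
      assert (0 <= u^2) by apply pow2_ge_0. nra. }
    assert (B : (2 * de p d k) * u * v <= d * (v^2 + u^2)).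
    { assert (Rabs (2 * de p d k) <= 2 * d) by (rewrite Rabs_right; lra).
      pose proof (young_abs _ u v _ H). nra. }
    assert (C : (2 * beta (S k) * e (S k)) * u * (- z) <= bn * (d * E) * (u^2 + (- z)^2)).
    { assert (Rabs (2 * beta (S k) * e (S k)) <= 2 * (bn * (d * E))).
      { rewrite !Rabs_mult, (Rabs_right 2), (Rabs_right (beta (S k))) by lra.
        assert (0 <= beta (S k)) by lra. pose proof (Rabs_pos (e (S k))).
        assert (beta (S k) * Rabs (e (S k)) <= bn * (d * E)).
        { apply Rmult_le_compat; lra. }
        lra. }
      pose proof (young_abs _ u (- z) _ H). nra. }
    assert (D : - 2 * beta (S k) * z * u^2 <= 2 * bn * rho * u^2).
    { apply Rabs_def2b in HyI. assert (0 <= u^2) by apply pow2_ge_0. assert (0 <= beta (S k)) by lra.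
      assert (- beta (S k) * z <= bn * rho) by nra. nra. }
    nra. }
  fold bn eI g. fold bn eI g in HSy.
  set (MS := ssum _ n') in *.
  set (yn := yv x (S n')) in *. set (yI := yv x (S (S n'))) in *. set (yl := yv x n') in *.
  set (Sy := ssum (fun k => beta k * yv x k) (S (S n'))) in *.
  assert (EQ : x (S (S n')) = eI + yI) by (unfold yI, yv, eI; ring).
  rewrite EQ. rewrite <- Hbdef.
  set (a := om p omega (S n') + mu + bn * eI).
  set (dd := beta 0%nat * eI).
  set (X := 2 * b * yI + 2 * eps * yn).
  assert (HyI := Hy (S (S n')) ltac:(lia)). fold yI in HyI.
  assert (Hyn := Hy (S n') ltac:(lia)). fold yn in Hyn.
  assert (TyI := HT (S (S n')) ltac:(lia)). fold yI in TyI.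
  assert (Tyn := HT (S n') ltac:(lia)). fold yn in Tyn.
  assert (Tyl := HT n' ltac:(lia)). fold yl in Tyl.
  assert (Hon := Hob (S n') ltac:(lia)). assert (Hdn := Hdb n' ltac:(lia)).
  assert (Hbn0 : 0 < bn) by lra.
  assert (HcG : c <= g) by (rewrite Hcdef; nra).
  assert (Hb2 : b <= 2 * bn) by (rewrite Hbdef; nra).
  assert (Hc0' : 0 <= c) by lra.
  assert (A3 : (2 * c * yn + 2 * eps * yI) * (- a * yn - b * yI) + X * (eI * (- beta 0%nat * yI + g * yn))
             <= - (mu * c0 / 2) * yn^2 - eps * b0 * yI^2).
  { set (P := - (2 * a * c - 2 * eps * c) + mu * c0 / 2).
    set (R := - (2 * eps * b + 2 * b * dd) + eps * b0).
    set (S := - eps * (a + dd)).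
    assert (Hid : (2 * c * yn + 2 * eps * yI) * (- a * yn - b * yI) + X * (eI * (- beta 0%nat * yI + g * yn))
                  - (- (mu * c0 / 2) * yn^2 - eps * b0 * yI^2) = P * yn^2 + R * yI^2 + 2 * S * yn * yI).
    { unfold P, R, S, X, dd. rewrite Hcdef. ring. }
    assert (Ha : mu <= a) by (unfold a; assert (0 <= bn * eI) by nra; lra).
    assert (Ha1 : a + dd <= omega + mu + bn + beta 0%nat) by (unfold a, dd; nra).
    assert (Ha0 : 0 <= a + dd) by (unfold dd; nra).
    assert (HP : P <= - (mu * c0 / 2)) by (unfold P; nra).
    assert (HR : R <= - (eps * b)).
    { assert (0 <= dd) by (unfold dd; nra). assert (0 <= b * dd) by nra.
      assert (eps * b0 <= eps * b) by nra. unfold R. lra. }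
    assert (HS : S^2 <= P * R).
    { assert (S^2 <= eps^2 * (omega + mu + bn + beta 0%nat)^2).
      { assert ((a + dd)^2 <= (omega + mu + bn + beta 0%nat)^2) by (apply pow_incr; lra).
        replace (S^2) with (eps^2 * (a + dd)^2) by (unfold S; ring).
        apply Rmult_le_compat_l. apply pow2_ge_0. exact H. }
      assert (eps^2 * (omega + mu + bn + beta 0%nat)^2 <= eps * (mu * c0 * b0 / 2)) by nra.
      assert (eps * (mu * c0 * b0 / 2) <= (mu * c0 / 2) * (eps * b)) by nra.
      assert ((mu * c0 / 2) * (eps * b) <= P * R).
      { replace (P * R) with ((- P) * (- R)) by ring. apply Rmult_le_compat; nra. }
      lra. }
    assert (HPn : P < 0) by nra.
    pose proof (quad_neg P R S yn yI HPn HS). lra. }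
  assert (HX2 : X^2 <= 32 * bn^2 * yI^2 + 8 * eps^2 * yn^2).
  { unfold X. pose proof (sq2 (2 * b * yI) (2 * eps * yn)).
    assert (b^2 <= 4 * bn^2) by nra. assert (b^2 * yI^2 <= 4 * bn^2 * yI^2) by (apply Rmult_le_compat_r; [apply pow2_ge_0|lra]).
    nra. }
  assert (HG1 : G1^2 <= INR n' * bn^2 * Mid).
  { pose proof (ssum_cs (fun k => (beta (S k) - beta 0%nat) * yv x (S k)) n') as Hcs. fold G1 in Hcs.
    assert (ssum (fun k => ((beta (S k) - beta 0%nat) * yv x (S k))^2) n' <= bn^2 * Mid).
    { replace (bn^2 * Mid) with (ssum (fun k => bn^2 * (yv x (S k))^2) n') by (rewrite ssum_scal; reflexivity).
      apply ssum_le. intros k Hk. cbv beta.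
      assert (H4 := Hbm (S k) ltac:(lia)).
      assert ((beta (S k) - beta 0%nat)^2 <= bn^2) by (apply pow_incr; lra).
      rewrite Rpow_mult_distr. apply Rmult_le_compat_r. apply pow2_ge_0. lra. }
    pose proof (pos_INR n'). assert (INR n' * ssum (fun k => ((beta (S k) - beta 0%nat) * yv x (S k))^2) n' <= INR n' * (bn^2 * Mid)) by (apply Rmult_le_compat_l; lra).
    lra. }
  assert (A4 : X * (eI * (beta 0%nat * w + G1)) <= 32 * lam * bn^2 * yI^2 + 8 * lam * eps^2 * yn^2
        + ((beta 0%nat)^2 / (2 * lam)) * w^2 + (INR n' * bn^2 / (2 * lam)) * Mid).
  { pose proof (young_lam X (eI * (beta 0%nat * w + G1)) lam Hlam).
    assert ((eI * (beta 0%nat * w + G1))^2 <= 2 * (beta 0%nat)^2 * w^2 + 2 * G1^2).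
    { rewrite Rpow_mult_distr. assert (eI^2 <= 1) by nra.
      pose proof (sq2 (beta 0%nat * w) G1). assert (0 <= (beta 0%nat * w + G1)^2) by apply pow2_ge_0.
      assert (eI^2 * (beta 0%nat * w + G1)^2 <= 1 * (beta 0%nat * w + G1)^2) by (apply Rmult_le_compat_r; lra).
      lra. }
    assert ((eI * (beta 0%nat * w + G1))^2 / (4 * lam) <= (2 * (beta 0%nat)^2 * w^2 + 2 * (INR n' * bn^2 * Mid)) / (4 * lam)).
    { unfold Rdiv. apply Rmult_le_compat_r. left; apply Rinv_0_lt_compat; lra. lra. }
    assert (lam * X^2 <= lam * (32 * bn^2 * yI^2 + 8 * eps^2 * yn^2)) by (apply Rmult_le_compat_l; lra).
    assert ((2 * (beta 0%nat)^2 * w^2 + 2 * (INR n' * bn^2 * Mid)) / (4 * lam) =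
       ((beta 0%nat)^2 / (2 * lam)) * w^2 + (INR n' * bn^2 / (2 * lam)) * Mid) by (field; lra).
    lra. }
  assert (A5 : (2 * c * yn + 2 * eps * yI) * (de p d n' * yl - bn * yI * yn)
       <= d * (2 * g + 2 * eps) * T + rho * bn * (2 * g + 2 * eps) * T).
  { assert (E1 : (2 * c * de p d n') * yn * yl <= (2 * c * d) * (yn^2 + yl^2) / 2).
    { apply young_abs. rewrite Rabs_right by nra. nra. }
    assert (E2 : (2 * eps * de p d n') * yI * yl <= (2 * eps * d) * (yI^2 + yl^2) / 2).
    { apply young_abs. rewrite Rabs_right by nra. nra. }
    assert (E3 : (- (2 * c * bn) * yI) * yn * yn <= (2 * c * bn * rho) * (yn^2 + yn^2) / 2).
    { apply young_abs. rewrite Rabs_mult, Rabs_Ropp, Rabs_right by nra.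
      apply Rmult_le_compat_l. nra. exact HyI. }
    assert (E4 : (- (2 * eps * bn) * yI) * yI * yn <= (2 * eps * bn * rho) * (yI^2 + yn^2) / 2).
    { apply young_abs. rewrite Rabs_mult, Rabs_Ropp, Rabs_right by nra.
      apply Rmult_le_compat_l. nra. exact HyI. }
    assert (F1 : (2 * c * d) * (yn^2 + yl^2) / 2 <= 2 * g * d * T).
    { assert (yn^2 + yl^2 <= 2 * T) by lra. assert (0 <= c * d) by nra.
      assert (c * d * (yn^2 + yl^2) <= c * d * (2 * T)) by (apply Rmult_le_compat_l; lra).
      assert (c * d * (2 * T) <= g * d * (2 * T)) by (apply Rmult_le_compat_r; [lra|]; apply Rmult_le_compat_r; lra).
      lra. }
    assert (F2 : (2 * eps * d) * (yI^2 + yl^2) / 2 <= 2 * eps * d * T).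
    { assert (yI^2 + yl^2 <= 2 * T) by lra. assert (0 <= eps * d) by nra.
      assert (eps * d * (yI^2 + yl^2) <= eps * d * (2 * T)) by (apply Rmult_le_compat_l; lra). lra. }
    assert (F3 : (2 * c * bn * rho) * (yn^2 + yn^2) / 2 <= 2 * g * bn * rho * T).
    { assert (0 <= c * bn * rho) by (apply Rmult_le_pos; nra).
      assert (c * bn * rho * (yn^2 + yn^2) <= c * bn * rho * (2 * T)) by (apply Rmult_le_compat_l; lra).
      assert (c * bn * rho * (2 * T) <= g * bn * rho * (2 * T)).
      { apply Rmult_le_compat_r. lra. apply Rmult_le_compat_r. lra. apply Rmult_le_compat_r; lra. }
      lra. }
    assert (F4 : (2 * eps * bn * rho) * (yI^2 + yn^2) / 2 <= 2 * eps * bn * rho * T).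
    { assert (0 <= eps * bn * rho) by (apply Rmult_le_pos; nra).
      assert (eps * bn * rho * (yI^2 + yn^2) <= eps * bn * rho * (2 * T)) by (apply Rmult_le_compat_l; lra). lra. }
    assert (Hexp : (2 * c * yn + 2 * eps * yI) * (de p d n' * yl - bn * yI * yn) =
       (2 * c * de p d n') * yn * yl + (2 * eps * de p d n') * yI * yl
       + (- (2 * c * bn) * yI) * yn * yn + (- (2 * eps * bn) * yI) * yI * yn) by ring.
    rewrite Hexp. lra. }
  assert (HSy2 : Sy^2 <= (INR n' + 2) * bn^2 * T).
  { pose proof (ssum_cs (fun k => beta k * yv x k) (S (S n'))) as Hcs. fold Sy in Hcs.
    assert (ssum (fun k => (beta k * yv x k)^2) (S (S n')) <= bn^2 * T).
    { apply Rle_trans with (bn^2 * ssum (fun k => (yv x k)^2) (S (S n'))).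
      replace (bn^2 * ssum (fun k => (yv x k)^2) (S (S n'))) with (ssum (fun k => bn^2 * (yv x k)^2) (S (S n'))) by (rewrite ssum_scal; reflexivity).
      apply ssum_le. intros k Hk. cbv beta.
      assert (H4 := Hbm k ltac:(lia)).
      assert ((beta k)^2 <= bn^2) by (apply pow_incr; lra).
      rewrite Rpow_mult_distr. apply Rmult_le_compat_r. apply pow2_ge_0. lra.
      apply Rmult_le_compat_l. apply pow2_ge_0. unfold T, Tf. apply ssum_prefix. lia. intros; apply pow2_ge_0. }
    rewrite !S_INR in Hcs. pose proof (pos_INR n').
    assert ((INR n' + 1 + 1) * ssum (fun k => (beta k * yv x k)^2) (S (S n')) <= (INR n' + 1 + 1) * (bn^2 * T))
      by (apply Rmult_le_compat_l; lra).
    lra. }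
  assert (A6 : X * (yI * Sy) <= rho * ((32 * bn^2 + 8 * eps^2) + (INR n' + 2) * bn^2) / 2 * T).
  { assert (yI * X * Sy <= rho * (X^2 + Sy^2) / 2) by (apply young_abs; exact HyI).
    assert (X^2 <= (32 * bn^2 + 8 * eps^2) * T).
    { assert (32 * bn^2 * yI^2 <= 32 * bn^2 * T) by (apply Rmult_le_compat_l; nra).
      assert (8 * eps^2 * yn^2 <= 8 * eps^2 * T) by (apply Rmult_le_compat_l; nra). lra. }
    assert (rho * (X^2 + Sy^2) <= rho * ((32 * bn^2 + 8 * eps^2) * T + (INR n' + 2) * bn^2 * T))
      by (apply Rmult_le_compat_l; lra).
    replace (X * (yI * Sy)) with (yI * X * Sy) by ring. lra. }
  assert (HyIT : INR n' * yI^2 <= INR n' * T) by (apply Rmult_le_compat_l; [apply pos_INR|lra]).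
  assert (Hm1 : d * (Low + Mid) <= d * (2 * T)) by (apply Rmult_le_compat_l; lra).
  assert (HdE : 0 <= bn * (d * E)) by (apply Rmult_le_pos; [lra|apply Rmult_le_pos; lra]).
  assert (Hm2 : bn * (d * E) * (Mid + INR n' * yI^2) <= bn * (d * E) * ((1 + INR n') * T)) by (apply Rmult_le_compat_l; lra).
  assert (Hm3 : 2 * bn * rho * Mid <= 2 * bn * rho * T) by (apply Rmult_le_compat_l; [nra|lra]).
  set (MSx := ssum (fun k => 2 * yv x (S k) * (- (om p omega (S k) + de p d (S k) + mu + beta (S k) * eI) * yv x (S k) +
      de p d k * yv x k - beta (S k) * e (S k) * yI - beta (S k) * yI * yv x (S k))) n') in *.
  assert (AMid : K * MSx <= K * (-2 * mu * Mid + d * (2 * T) + bn * (d * E) * ((1 + INR n') * T) + 2 * bn * rho * T))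
    by (apply Rmult_le_compat_l; lra).
  set (kap := Rmin mu (Rmin (mu * c0 / 4) (eps * b0 / 2))).
  assert (Hk1 : kap <= mu) by apply Rmin_l.
  assert (Hk2 : kap <= mu * c0 / 4) by (eapply Rle_trans; [apply Rmin_r|apply Rmin_l]).
  assert (Hk3 : kap <= eps * b0 / 2) by (eapply Rle_trans; [apply Rmin_r|apply Rmin_r]).
  assert (Pw : 0 <= w^2) by apply pow2_ge_0. assert (Pn : 0 <= yn^2) by apply pow2_ge_0.
  assert (PI : 0 <= yI^2) by apply pow2_ge_0.
  assert (K1 : kap * w^2 <= mu * w^2) by (apply Rmult_le_compat_r; lra).
  assert (K2 : kap * Mid <= mu * Mid) by (apply Rmult_le_compat_r; lra).
  assert (K3 : kap * yn^2 <= mu * c0 / 4 * yn^2) by (apply Rmult_le_compat_r; lra).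
  assert (K4 : kap * yI^2 <= eps * b0 / 2 * yI^2) by (apply Rmult_le_compat_r; lra).
  assert (L1 : ((beta 0%nat)^2 / (2 * lam) + mu) * w^2 <= 2 * L * mu * w^2) by (apply Rmult_le_compat_r; lra).
  assert (L2 : (INR n' * bn^2 / (2 * lam) + mu) * Mid <= 2 * K * mu * Mid) by (apply Rmult_le_compat_r; lra).
  assert (L3 : 32 * lam * bn^2 * yI^2 <= eps * b0 / 2 * yI^2) by (apply Rmult_le_compat_r; lra).
  assert (L4 : 8 * lam * eps^2 * yn^2 <= mu * c0 / 4 * yn^2) by (apply Rmult_le_compat_r; lra).
  assert (Hsplit : 2 * L * w * (- mu * w) + K * MSx + (2 * c * yn + 2 * eps * yI) * (- a * yn - b * yI + de p d n' * yl - bn * yI * yn) +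
     X * ((eI + yI) * (beta 0%nat * (w - yI) + G1 + g * yn)) =
     2 * L * w * (- mu * w) + K * MSx + ((2 * c * yn + 2 * eps * yI) * (- a * yn - b * yI) + X * (eI * (- beta 0%nat * yI + g * yn)))
     + X * (eI * (beta 0%nat * w + G1))
     + (2 * c * yn + 2 * eps * yI) * (de p d n' * yl - bn * yI * yn)
     + X * (yI * Sy)).
  { fold G1 in HSy. rewrite HSy. ring. }
  fold G1 in HSy. rewrite Hsplit. lra.
Qed.


Lemma Vf_le_U x : 0 <= L -> 0 <= K -> 0 <= c -> 0 <= b -> 0 <= eps ->
  Vf x <= (L + K + c + b + eps) * Uf x.
Proof.
  intros HL HK Hc Hb He. unfold Vf, Uf.
  set (w := ssum (yv x) (S (S (S n')))).
  set (Mid := ssum (fun k => (yv x (S k))^2) n').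
  assert (HM := Mid_nonneg x). fold Mid in HM.
  set (u := yv x (S n')). set (v := yv x (S (S n'))).
  assert (2 * eps * u * v <= eps * (u^2 + v^2)) by (pose proof (pow2_ge_0 (u - v)); nra).
  pose proof (pow2_ge_0 w). pose proof (pow2_ge_0 u). pose proof (pow2_ge_0 v).
  assert (L * w^2 <= (L + K + c + b + eps) * w^2) by (apply Rmult_le_compat_r; lra).
  assert (K * Mid <= (L + K + c + b + eps) * Mid) by (apply Rmult_le_compat_r; lra).
  assert (c * u^2 + eps * u^2 <= (L + K + c + b + eps) * u^2) by nra.
  assert (b * v^2 + eps * v^2 <= (L + K + c + b + eps) * v^2) by nra.
  nra.
Qed.

Lemma stable_of_bounds E lam c0 b0 :
  0 < mu -> 0 <= omega -> p 0%nat = 0 -> (forall i, (1 <= i <= S n')%nat -> 0 <= p i <= 1) ->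
  0 <= beta 0%nat -> (forall i, (i < S n')%nat -> beta i <= beta (S i)) -> beta 0%nat < beta (S n') ->
  0 <= d ->
  (forall i, (i <= S (S n'))%nat -> Fx e i = 0) ->
  ssum e (S (S (S n'))) = 1 ->
  ssum (fun k => beta k * e k) (S (S n')) = r + mu ->
  0 < e (S (S n')) <= 1 -> 0 <= e (S n') <= 2 ->
  0 <= E -> (forall k, (k < n')%nat -> Rabs (e (S k)) <= d * E) ->
  b = beta (S n') * e (S n') -> c = (beta (S n') - beta 0%nat) * e (S (S n')) ->
  0 < c0 -> c0 <= c -> 0 < b0 -> b0 <= b ->
  0 < eps -> eps <= mu / 2 -> eps <= c0 / 2 -> eps <= b0 / 2 ->
  eps * (omega + mu + beta (S n') + beta 0%nat)^2 <= mu * c0 * b0 / 2 ->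
  0 < lam -> 32 * lam * (beta (S n'))^2 <= eps * b0 / 2 -> 8 * lam * eps^2 <= mu * c0 / 4 ->
  (beta 0%nat)^2 / (2 * lam) + mu <= 2 * L * mu ->
  INR n' * (beta (S n'))^2 / (2 * lam) + mu <= 2 * K * mu -> 1 <= L -> 1 <= K ->
  d * (K * (2 + beta (S n') * E * (1 + INR n')) + 2 * (beta (S n') - beta 0%nat) + 2 * eps)
    * (INR (S (S (S n'))) * (3 * (INR n' + 2))) <= Rmin mu (Rmin (mu * c0 / 4) (eps * b0 / 2)) / 4 ->
  loc_asymp_stable (field (S n') d omega r mu p beta) (S (S n')) e.
Proof.
  intros Hmu Hom Hp0 Hp Hb0 Hmono Hbn Hd HeqE HsE HbE HI Hen HE Hmid Hbdef Hcdef Hc0 Hc0c Hb0p Hb0b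
    Heps Heps2 Hepsc Hepsb Heps3 Hlam Hlam1 Hlam2 HL HK HL1 HK1 Hsmall.
  set (kap := Rmin mu (Rmin (mu * c0 / 4) (eps * b0 / 2))) in *.
  assert (Hkap : 0 < kap).
  { unfold kap. apply Rmin_pos. lra. apply Rmin_pos. nra. nra. }
  set (Cp := K * (2 + beta (S n') * E * (1 + INR n')) + 2 * (beta (S n') - beta 0%nat) + 2 * eps) in *.
  set (Cn := 2 * K * beta (S n') + beta (S n') * (2 * (beta (S n') - beta 0%nat) + 2 * eps)
                 + (32 * (beta (S n'))^2 + 8 * eps^2 + (INR n' + 2) * (beta (S n'))^2) / 2).
  set (CTT := INR (S (S (S n'))) * (3 * (INR n' + 2))) in *.
  assert (HCTT : 0 < CTT).
  { unfold CTT. apply Rmult_lt_0_compat. apply lt_0_INR; lia. pose proof (pos_INR n'). lra. }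
  assert (HCn : 0 <= Cn).
  { unfold Cn. pose proof (pos_INR n').
    assert (0 <= 2 * K * beta (S n')) by nra.
    assert (0 <= beta (S n') * (2 * (beta (S n') - beta 0%nat) + 2 * eps)) by nra.
    assert (0 <= (32 * (beta (S n'))^2 + 8 * eps^2 + (INR n' + 2) * (beta (S n'))^2)) by nra.
    lra. }
  assert (HCp : 0 <= Cp).
  { unfold Cp. pose proof (pos_INR n'). assert (0 <= beta (S n') * E) by nra.
    assert (0 <= beta (S n') * E * (1 + INR n')) by nra. nra. }
  set (rho := kap / (4 * (Cn * CTT + 1))).
  assert (Hrho : 0 < rho) by (unfold rho; apply Rdiv_lt_0_compat; nra).
  assert (Hrho2 : rho * Cn * CTT <= kap / 4).
  { unfold rho. apply Rmult_le_reg_r with (4 * (Cn * CTT + 1)). nra.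
    field_simplify; [|nra]. nra. }
  assert (Hc : 0 <= c) by lra. assert (Hb : 0 <= b) by lra.
  set (CV := L + K + c + b + eps).
  assert (HCV : 0 < CV) by (unfold CV; lra).
  set (mV := Rmin 1 (Rmin (c/2) (b/2))).
  assert (HmV : 0 < mV) by (unfold mV; apply Rmin_pos; [lra|apply Rmin_pos; lra]).
  apply (lyap_LAS _ (S (S n')) e Vf Wf (mV / (3 * (INR n' + 2))) (CV * ((INR (S (S (S n'))))^2 + INR n' + 2)) (kap / (2 * CV)) rho).
  - intros x t H. apply Vf_deriv. exact H.
  - apply Rdiv_lt_0_compat. lra. pose proof (pos_INR n'). lra.
  - intros x i Hi. pose proof (y_le_U x i Hi) as H1. pose proof (Vf_lower x HL1 HK1 (Rlt_le _ _ Heps) ltac:(lra) ltac:(lra)) as H2.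
    fold mV in H2. unfold yv in H1.
    pose proof (pos_INR n').
    apply Rle_trans with (mV * Uf x); [|exact H2].
    apply Rmult_le_reg_r with (3 * (INR n' + 2)). lra.
    field_simplify; [|lra]. 
    assert (mV * (x i - e i)^2 <= mV * (3 * (INR n' + 2) * Uf x)) by (apply Rmult_le_compat_l; lra).
    lra.
  - apply Rmult_le_pos. lra. pose proof (pos_INR n'). pose proof (pow2_ge_0 (INR (S (S (S n'))))). lra.
  - intros x dd Hdd Hcl. pose proof (Vf_upper x dd ltac:(lra) ltac:(lra) Hc Hb ltac:(lra) Hdd Hcl). fold CV in H. lra.
  - apply Rdiv_lt_0_compat; lra.
  - exact Hrho.
  - intros x Hcl.
    assert (HU : 0 <= Uf x).
    { unfold Uf. pose proof (Mid_nonneg x). pose proof (pow2_ge_0 (ssum (yv x) (S (S (S n'))))).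
      pose proof (pow2_ge_0 (yv x (S n'))). pose proof (pow2_ge_0 (yv x (S (S n')))). lra. }
    assert (HW := W_bound x E rho lam c0 b0 Hmu Hom Hp0 Hp Hb0 Hmono Hbn Hd (Rlt_le _ _ Hrho) HeqE HsE HbE HI Hen HE Hmid
      Hbdef Hcdef Hc0 Hc0c Hb0p Hb0b Heps Heps2 Heps3 Hlam Hlam1 Hlam2 HL HK ltac:(lra)).
    assert (HW' : Wf x <= - kap * Uf x + (d * Cp + rho * Cn) * Tf x).
    { apply HW. intros j Hj. left. apply Hcl. exact Hj. }
    assert (HT : Tf x <= CTT * Uf x) by (unfold CTT; pose proof (T_le_U x); lra).
    assert (HdC : 0 <= d * Cp + rho * Cn) by nra.
    assert ((d * Cp + rho * Cn) * Tf x <= (d * Cp + rho * Cn) * (CTT * Uf x)) by (apply Rmult_le_compat_l; lra).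
    assert ((d * Cp + rho * Cn) * (CTT * Uf x) <= (kap / 2) * Uf x).
    { replace ((d * Cp + rho * Cn) * (CTT * Uf x)) with ((d * Cp * CTT + rho * Cn * CTT) * Uf x) by ring.
      apply Rmult_le_compat_r. lra. lra. }
    assert (HV := Vf_le_U x ltac:(lra) ltac:(lra) Hc Hb ltac:(lra)). fold CV in HV.
    assert (kap / (2 * CV) * Vf x <= kap / 2 * Uf x).
    { apply Rmult_le_reg_r with (2 * CV). lra. field_simplify; [|lra].
      assert (kap * Vf x <= kap * (CV * Uf x)) by (apply Rmult_le_compat_l; lra). lra. }
    lra.
Qed.

End Lyap.


Theorem theorem4 (n : nat) (omega r mu : R) (p beta : nat -> R) :
  (1 <= n)%nat ->
  0 <= omega -> 0 < r -> 0 < mu ->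
  p 0%nat = 0 ->
  (forall i : nat, (1 <= i <= n)%nat -> 0 <= p i <= 1) ->
  0 <= beta 0%nat ->
  (forall i : nat, (i < n)%nat -> beta i <= beta (S i)) ->
  beta 0%nat < beta n ->
  (om p omega n + mu) * (mu + r) < beta 0%nat * om p omega n + beta n * mu ->
  exists delta0 : R, 0 < delta0 /\
    forall delta : R, 0 <= delta <= delta0 ->
      (exists e : nat -> R, endemic_eq n delta omega r mu p beta e) /\
      (forall e : nat -> R, endemic_eq n delta omega r mu p beta e ->
         loc_asymp_stable (field n delta omega r mu p beta) (S n) e).
Proof.
  intros Hn Hom Hr Hmu Hp0 Hp Hb0 Hmono Hbn Hcond.
  destruct n as [|n']; [lia|]. clear Hn.
  pose proof (beta_mono (S n') beta Hmono) as Hbm.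
  pose proof (om_bounds (S n') p omega Hom Hp) as Hob.
  assert (Hon := Hob (S n') ltac:(lia)).
  set (bn := beta (S n')) in *.
  set (b0' := beta 0%nat) in *.
  set (g := bn - b0').
  assert (Hg : 0 < g) by (unfold g; lra).
  assert (Hbnp : 0 < bn) by lra.
  set (M0 := 2 * (omega + r) / mu).
  assert (HM0 : 0 <= M0) by (unfold M0; apply Rmult_le_pos; [lra|left; apply Rinv_0_lt_compat; lra]).
  set (E := M0 / mu).
  assert (HE : 0 <= E) by (unfold E; apply Rmult_le_pos; [lra|left; apply Rinv_0_lt_compat; lra]).
  set (A := om p omega (S n') + bn + mu).
  assert (HA : 0 < A) by (unfold A; lra).
  set (s := mu / (2 * A)).
  assert (Hs : 0 < s) by (unfold s; apply Rdiv_lt_0_compat; lra).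
  set (b0 := bn * s).
  assert (Hb0p : 0 < b0) by (unfold b0; nra).
  set (D0 := om p omega (S n') + mu).
  set (eta := b0' * om p omega (S n') + bn * mu - D0 * (mu + r)).
  assert (Heta : 0 < eta) by (unfold eta, D0; lra).
  assert (HD0 : 0 < D0) by (unfold D0; lra).
  set (iota := eta / (2 * (b0' * D0 + 2 * g * bn))).
  assert (Hden : 0 < b0' * D0 + 2 * g * bn) by nra.
  assert (Hiota : 0 < iota) by (unfold iota; apply Rdiv_lt_0_compat; lra).
  set (c0 := g * iota).
  assert (Hc0 : 0 < c0) by (unfold c0; nra).
  set (Q := omega + mu + bn + b0').
  assert (HQ : 0 < Q) by (unfold Q; lra).
  set (eps := Rmin (Rmin (mu/2) (Rmin (c0/2) (b0/2))) (mu * c0 * b0 / (2 * Q^2))).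
  assert (Heps : 0 < eps).
  { unfold eps. apply Rmin_pos. apply Rmin_pos. lra. apply Rmin_pos; lra.
    apply Rdiv_lt_0_compat. apply Rmult_lt_0_compat. nra. lra. nra. }
  assert (He1 : eps <= mu / 2) by (unfold eps; eapply Rle_trans; [apply Rmin_l|apply Rmin_l]).
  assert (He2 : eps <= c0 / 2).
  { unfold eps. eapply Rle_trans; [apply Rmin_l|]. eapply Rle_trans; [apply Rmin_r|apply Rmin_l]. }
  assert (He3 : eps <= b0 / 2).
  { unfold eps. eapply Rle_trans; [apply Rmin_l|]. eapply Rle_trans; [apply Rmin_r|apply Rmin_r]. }
  assert (He4 : eps * Q^2 <= mu * c0 * b0 / 2).
  { assert (eps <= mu * c0 * b0 / (2 * Q^2)) by (unfold eps; apply Rmin_r).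
    assert (0 < Q^2) by nra.
    apply Rmult_le_compat_r with (r := Q^2) in H; [|lra].
    replace (mu * c0 * b0 / (2 * Q ^ 2) * Q ^ 2) with (mu * c0 * b0 / 2) in H by (field; lra). exact H. }
  set (lam := Rmin (eps * b0 / (64 * bn^2)) (mu * c0 / (32 * eps^2))).
  assert (Hlam : 0 < lam).
  { unfold lam. apply Rmin_pos; apply Rdiv_lt_0_compat; nra. }
  assert (Hl1 : 32 * lam * bn^2 <= eps * b0 / 2).
  { assert (lam <= eps * b0 / (64 * bn^2)) by (unfold lam; apply Rmin_l).
    apply Rmult_le_compat_r with (r := 32 * bn^2) in H; [|nra].
    replace (eps * b0 / (64 * bn ^ 2) * (32 * bn ^ 2)) with (eps * b0 / 2) in H by (field; lra). lra. }
  assert (Hl2 : 8 * lam * eps^2 <= mu * c0 / 4).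
  { assert (lam <= mu * c0 / (32 * eps^2)) by (unfold lam; apply Rmin_r).
    apply Rmult_le_compat_r with (r := 8 * eps^2) in H; [|nra].
    replace (mu * c0 / (32 * eps ^ 2) * (8 * eps ^ 2)) with (mu * c0 / 4) in H by (field; lra). lra. }
  set (L := b0'^2 / (4 * lam * mu) + 1).
  set (K := INR n' * bn^2 / (4 * lam * mu) + 1).
  assert (HL : b0'^2 / (2 * lam) + mu <= 2 * L * mu).
  { assert (2 * L * mu = b0'^2 / (2 * lam) + 2 * mu) by (unfold L; field; lra). lra. }
  assert (HK : INR n' * bn^2 / (2 * lam) + mu <= 2 * K * mu).
  { assert (2 * K * mu = INR n' * bn^2 / (2 * lam) + 2 * mu) by (unfold K; field; lra). lra. }
  assert (HL1 : 1 <= L).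
  { unfold L. assert (0 <= b0'^2 / (4 * lam * mu)) by (apply Rdiv_le_0_compat; nra). lra. }
  assert (HK1 : 1 <= K).
  { unfold K. pose proof (pos_INR n'). assert (0 <= INR n' * bn^2 / (4 * lam * mu)) by (apply Rdiv_le_0_compat; nra). lra. }
  set (kap := Rmin mu (Rmin (mu * c0 / 4) (eps * b0 / 2))).
  assert (Hkap : 0 < kap) by (unfold kap; apply Rmin_pos; [lra|apply Rmin_pos; nra]).
  set (Cp := K * (2 + bn * E * (1 + INR n')) + 2 * g + 2 * eps).
  set (CTT := INR (S (S (S n'))) * (3 * (INR n' + 2))).
  assert (HCp : 0 <= Cp).
  { unfold Cp. pose proof (pos_INR n'). assert (0 <= bn * E) by nra. assert (0 <= bn * E * (1 + INR n')) by nra. nra. }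
  assert (HCTT : 0 < CTT).
  { unfold CTT. apply Rmult_lt_0_compat. apply lt_0_INR; lia. pose proof (pos_INR n'). lra. }
  set (X1 := D0 * INR n' * bn + mu * g).
  assert (HX1 : 0 <= X1) by (unfold X1; apply Rplus_le_le_0_compat; [apply Rmult_le_pos; [apply Rmult_le_pos; [lra|apply pos_INR]|lra] | apply Rmult_le_pos; lra]).
  set (delta0 := Rmin (Rmin mu (mu^2 / (2 * (omega * INR (S n') + 1))))
                      (Rmin (mu / (2 * (M0 + 1))) (Rmin (mu * eta / (2 * (M0 * X1 + 1))) (kap / (4 * (Cp * CTT + 1)))))).
  assert (HoI : 0 <= omega * INR (S n')) by (apply Rmult_le_pos; [lra|apply pos_INR]).
  assert (HM0X : 0 <= M0 * X1) by nra.
  exists delta0. split.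
  { unfold delta0. apply Rmin_pos; apply Rmin_pos.
    lra. apply Rdiv_lt_0_compat; nra. apply Rdiv_lt_0_compat; lra.
    apply Rmin_pos; apply Rdiv_lt_0_compat; nra. }
  intros delta [Hd0 Hdd].
  assert (Hd1 : delta <= mu) by (eapply Rle_trans; [exact Hdd|]; unfold delta0; eapply Rle_trans; [apply Rmin_l|apply Rmin_l]).
  assert (Hd2 : delta <= mu^2 / (2 * (omega * INR (S n') + 1))).
  { eapply Rle_trans; [exact Hdd|]. unfold delta0. eapply Rle_trans; [apply Rmin_l|apply Rmin_r]. }
  assert (Hd3 : delta <= mu / (2 * (M0 + 1))).
  { eapply Rle_trans; [exact Hdd|]. unfold delta0. eapply Rle_trans; [apply Rmin_r|apply Rmin_l]. }
  assert (Hd4 : delta <= mu * eta / (2 * (M0 * X1 + 1))).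
  { eapply Rle_trans; [exact Hdd|]. unfold delta0. eapply Rle_trans; [apply Rmin_r|]. eapply Rle_trans; [apply Rmin_r|apply Rmin_l]. }
  assert (Hd5 : delta <= kap / (4 * (Cp * CTT + 1))).
  { eapply Rle_trans; [exact Hdd|]. unfold delta0. eapply Rle_trans; [apply Rmin_r|]. eapply Rle_trans; [apply Rmin_r|apply Rmin_r]. }
  assert (C2 : delta * omega * INR (S n') <= mu^2 / 2).
  { apply Rmult_le_compat_r with (r := 2 * (omega * INR (S n') + 1)) in Hd2; [|lra].
    replace (mu ^ 2 / (2 * (omega * INR (S n') + 1)) * (2 * (omega * INR (S n') + 1))) with (mu^2) in Hd2 by (field; lra).
    nra. }
  assert (C3 : delta * (2 * (omega + r) / mu) <= mu / 2).
  { fold M0. apply Rmult_le_compat_r with (r := 2 * (M0 + 1)) in Hd3; [|lra].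
    replace (mu / (2 * (M0 + 1)) * (2 * (M0 + 1))) with mu in Hd3 by (field; lra). nra. }
  assert (C4 : delta * M0 * X1 <= mu * eta / 2).
  { apply Rmult_le_compat_r with (r := 2 * (M0 * X1 + 1)) in Hd4; [|lra].
    replace (mu * eta / (2 * (M0 * X1 + 1)) * (2 * (M0 * X1 + 1))) with (mu * eta) in Hd4 by (field; lra). nra. }
  assert (C5 : delta * Cp * CTT <= kap / 4).
  { apply Rmult_le_compat_r with (r := 4 * (Cp * CTT + 1)) in Hd5; [|nra].
    replace (kap / (4 * (Cp * CTT + 1)) * (4 * (Cp * CTT + 1))) with kap in Hd5 by (field; nra).
    assert (0 <= Cp * CTT) by nra. nra. }
  split.
  { apply (exists_endemic n' omega r mu delta p beta); auto. }
  intros e He.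
  destruct (eq_bounds n' omega r mu p beta delta e Hom Hr Hmu Hp0 Hp Hb0 Hmono Hd0 Hd1 C2 C3 He)
    as [He0 [Hch [Hmid [Henp [Hen2 [HenA [Hn [HbE HsE]]]]]]]].
  fold M0 in He0, Hch, Hmid.
  assert (HI := proj2 (proj2 He)).
  assert (HeI : iota <= e (S (S n'))).
  { pose proof (eI_lower n' omega r mu p beta delta e M0 Hom Hmu Hp0 Hp Hb0 Hmono Hbn Hd0 HM0 Hch Hmid Henp Hen2
      (proj1 HI) Hn HbE HsE) as H.
    cbv zeta in H. unfold iota, eta, D0, g. apply H. fold bn b0'. fold D0. fold g. fold X1. fold eta. exact C4. }
  apply (stable_of_bounds n' omega r mu delta p beta e L K (bn * e (S n')) (g * e (S (S n'))) eps E lam c0 b0);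
    auto; try lra.
  - intros i Hi. apply (proj1 He). exact Hi.
  - rewrite ssum_S, HsE. ring.
  - intros k Hk. specialize (Hmid k Hk). unfold E. apply Rmult_le_reg_l with mu. lra.
    replace (mu * (delta * (M0 / mu))) with (delta * M0) by (field; lra). exact Hmid.
  - unfold c0. apply Rmult_le_compat_l; lra.
  - unfold b0. apply Rmult_le_compat_l. lra. unfold s.
    apply Rmult_le_reg_r with (2 * A). lra. field_simplify; [|lra]. replace (2 * A * e (S n')) with (2 * e (S n') * (om p omega (S n') + beta (S n') + mu)) by (unfold A, bn; ring). exact HenA.
Qed.
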